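(* In the setting described in the context, assume $\omega_+\neq3\omega_-$, and let $r>0$, $0<\delta<1$ satisfy $$r^2S_*\leq1-\delta.$$ Then $\max_{\|\mathbf z\|\leq r}\|\nabla S\|\leq(1-\delta)r$; consequently $\Phi_{\rm nonres}=\Phi^1_S$ is well defined from $B_{\delta r}$ to $B_r$, and $$\|\Phi_{\rm nonres}(\mathbf z)-\mathbf z\|\leq r^3S_*\ \ (\mathbf z\in B_{\delta r}),\qquad \max_{\|\mathbf z\|\leq\delta r}|R|\leq R_\dagger r^6,$$ where $R:=\mathtt H\circ\Phi_{\rm nonres}-\mathtt N-\bar{\mathtt H}_4$ and $R_\dagger:=\sum_{j=1,2}S^{(j)}\big(2\bar{\mathtt H}_4^{(j)}+\hat{\mathtt G}^{(j)}\big)$ with $\hat{\mathtt G}:=\mathtt G-\bar{\mathtt H}_4$.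
   Context: Let $\mathtt M$ be a real symmetric positive-definite $2\times2$ matrix, $\mathtt K$ a real diagonal positive-definite $2\times 2$ matrix, and $M_3,N_3\in\mathbb R$. Let $\omega_-^2<\omega_+^2$ be the (distinct, positive) eigenvalues of $\mathtt M^{-1}\mathtt K$, $0<\omega_-<\omega_+$, $\boldsymbol\omega:=(\omega_-,\omega_+)$, and let $\mathbf\Phi=\begin{pmatrix}\phi_1^-&\phi_1^+\\ \phi_2^-&\phi_2^+\end{pmatrix}$ be real with $\mathbf\Phi^T\mathtt M\mathbf\Phi=\mathbf I$, $\mathbf\Phi^T\mathtt K\mathbf\Phi=\mathrm{diag}(\omega_-^2,\omega_+^2)$. Let $f(q_1,q_2)=\tfrac14M_3(\phi_1^-q_1+\phi_1^+q_2)^4+\tfrac14N_3(\phi_2^-q_1+\phi_2^+q_2)^4$. On $\mathbb C^2\ni\mathbf z$ set $\mathtt N=\omega_-|z_1|^2+\omega_+|z_2|^2$, $\mathtt G=f\big(\tfrac{z_1+\bar z_1}{\sqrt{2\omega_-}},\tfrac{z_2+\bar z_2}{\sqrt{2\omega_+}}\big)=\sum_{|\boldsymbol\alpha+\boldsymbol\beta|=4}\mathtt G_{\boldsymbol\alpha,\boldsymbol\beta}\mathbf z^{\boldsymbol\alpha}\bar{\mathbf z}^{\boldsymbol\beta}$ ($\boldsymbol\alpha,\boldsymbol\beta\in\mathbb N^2$, $\mathbf z^{\boldsymbol\alpha}=z_1^{\alpha_1}z_2^{\alpha_2}$, $|\boldsymbol\alpha+\boldsymbol\beta|=\alpha_1+\alpha_2+\beta_1+\beta_2$),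 $\mathtt H=\mathtt N+\mathtt G$, $\bar{\mathtt H}_4:=\sum_{|\boldsymbol\alpha|=2}\mathtt G_{\boldsymbol\alpha,\boldsymbol\alpha}|z_1|^{2\alpha_1}|z_2|^{2\alpha_2}$. $S$ is the quartic polynomial with coefficients $S_{\boldsymbol\alpha,\boldsymbol\beta}=\mathrm i\,\mathtt G_{\boldsymbol\alpha,\boldsymbol\beta}/(\boldsymbol\omega\cdot(\boldsymbol\alpha-\boldsymbol\beta))$ for $\boldsymbol\alpha\neq\boldsymbol\beta$, $0$ otherwise; $\Phi^t_S$ is the flow of $\dot z_j=-\mathrm i\partial_{\bar z_j}S$. For a quartic polynomial $P=\sum_{|\boldsymbol\alpha+\boldsymbol\beta|=4}P_{\boldsymbol\alpha,\boldsymbol\beta}\mathbf z^{\boldsymbol\alpha}\bar{\mathbf z}^{\boldsymbol\beta}$, $P^{(j)}:=\sum_{|\boldsymbol\alpha+\boldsymbol\beta|=4}\alpha_j|P_{\boldsymbol\alpha,\boldsymbol\beta}|$ ($j=1,2$) and $P_*:=\max\{P^{(1)},P^{(2)}\}$; in particular $S^{(j)}=\sum_{|\boldsymbol\alpha+\boldsymbol\beta|=4,\boldsymbol\alpha\ne\boldsymbol\beta}\alpha_j|\mathtt G_{\boldsymbol\alpha,\boldsymbol\beta}|/|\boldsymbol\omega\cdot(\boldsymbol\alpha-\boldsymbol\beta)|$ and $S_*=\max\{S^{(1)},S^{(2)}\}$. $\|\mathbf z\|:=\max\{|z_1|,|z_2|\}$, $B_\rho:=\{\|\mathbf z\|\leq\rho\}\subset\mathbb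 C^2$, $\nabla S$ is the gradient with respect to $(\mathbf z,\bar{\mathbf z})$ measured in the max norm. *)

(* Defs.v *)
From Stdlib Require Import Reals Lra Lia List Arith.
From Coquelicot Require Import Coquelicot.
Import ListNotations.
Open Scope R_scope.

Definition mat2 := nat -> nat -> R.
Definition mmul (A B : mat2) : mat2 :=
  fun i j => A i 0%nat * B 0%nat j + A i 1%nat * B 1%nat j.
Definition mtr (A : mat2) : mat2 := fun i j => A j i.
Definition mdiag (a b : R) : mat2 :=
  fun i j => if Nat.eqb i j then (if Nat.eqb i 0 then a else b) else 0.
Definition meq (A B : mat2) : Prop :=
  forall i j, (i < 2)%nat -> (j < 2)%nat -> A i j = B i j.
Definition symmetric2 (A : mat2) : Prop := A 0%nat 1%nat = A 1%nat 0%nat.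
Definition diagonal2 (A : mat2) : Prop := A 0%nat 1%nat = 0 /\ A 1%nat 0%nat = 0.
Definition posdef2 (A : mat2) : Prop :=
  forall x0 x1 : R, (x0, x1) <> (0, 0) ->
    0 < x0 * (A 0%nat 0%nat * x0 + A 0%nat 1%nat * x1)
        + x1 * (A 1%nat 0%nat * x0 + A 1%nat 1%nat * x1).
Definition det2 (A : mat2) : R := A 0%nat 0%nat * A 1%nat 1%nat - A 0%nat 1%nat * A 1%nat 0%nat.
Definition inv2 (A : mat2) : mat2 := fun i j =>
  match i, j with
  | O, O => A 1%nat 1%nat / det2 A
  | O, _ => - A 0%nat 1%nat / det2 A
  | _, O => - A 1%nat 0%nat / det2 A
  | _, _ => A 0%nat 0%nat / det2 A
  end.
Definition eigenvalue2 (A : mat2) (lam : R) : Prop :=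
  exists v0 v1 : R, (v0, v1) <> (0, 0) /\
    A 0%nat 0%nat * v0 + A 0%nat 1%nat * v1 = lam * v0 /\
    A 1%nat 0%nat * v0 + A 1%nat 1%nat * v1 = lam * v1.

(** * Quartic polynomials in (z1, z2, conj z1, conj z2)
    A multi-index (alpha, beta) = ((a1,a2),(b1,b2)) is represented by the four
    naturals a1 a2 b1 b2; a quartic polynomial by its coefficient family. *)
Definition qpoly := nat -> nat -> nat -> nat -> C.

Definition quartic_idx : list (nat * nat * nat * nat) :=
  filter (fun '(a1, a2, b1, b2) => Nat.eqb (a1 + a2 + b1 + b2) 4)
    (flat_map (fun a1 => flat_map (fun a2 => flat_map (fun b1 =>
       map (fun b2 => (a1, a2, b1, b2)) (seq 0 5)) (seq 0 5)) (seq 0 5)) (seq 0 5)).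

Definition qsumR (F : nat -> nat -> nat -> nat -> R) : R :=
  fold_right Rplus 0 (map (fun '(a1, a2, b1, b2) => F a1 a2 b1 b2) quartic_idx).
Definition qsumC (F : nat -> nat -> nat -> nat -> C) : C :=
  fold_right Cplus 0%C (map (fun '(a1, a2, b1, b2) => F a1 a2 b1 b2) quartic_idx).

Definition qeval (P : qpoly) (z1 z2 : C) : C :=
  qsumC (fun a1 a2 b1 b2 =>
    (P a1 a2 b1 b2 * z1 ^ a1 * z2 ^ a2 * Cconj z1 ^ b1 * Cconj z2 ^ b2)%C).

Definition dz1 (P : qpoly) (z1 z2 : C) : C :=
  qsumC (fun a1 a2 b1 b2 => (P a1 a2 b1 b2 * RtoC (INR a1)
    * z1 ^ (a1 - 1) * z2 ^ a2 * Cconj z1 ^ b1 * Cconj z2 ^ b2)%C).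
Definition dz2 (P : qpoly) (z1 z2 : C) : C :=
  qsumC (fun a1 a2 b1 b2 => (P a1 a2 b1 b2 * RtoC (INR a2)
    * z1 ^ a1 * z2 ^ (a2 - 1) * Cconj z1 ^ b1 * Cconj z2 ^ b2)%C).
Definition dzb1 (P : qpoly) (z1 z2 : C) : C :=
  qsumC (fun a1 a2 b1 b2 => (P a1 a2 b1 b2 * RtoC (INR b1)
    * z1 ^ a1 * z2 ^ a2 * Cconj z1 ^ (b1 - 1) * Cconj z2 ^ b2)%C).
Definition dzb2 (P : qpoly) (z1 z2 : C) : C :=
  qsumC (fun a1 a2 b1 b2 => (P a1 a2 b1 b2 * RtoC (INR b2)
    * z1 ^ a1 * z2 ^ a2 * Cconj z1 ^ b1 * Cconj z2 ^ (b2 - 1))%C).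

Definition cnorm2 (z1 z2 : C) : R := Rmax (Cmod z1) (Cmod z2).
Definition gradnorm (P : qpoly) (z1 z2 : C) : R :=
  Rmax (Rmax (Cmod (dz1 P z1 z2)) (Cmod (dz2 P z1 z2)))
       (Rmax (Cmod (dzb1 P z1 z2)) (Cmod (dzb2 P z1 z2))).

Definition qnorm1 (P : qpoly) : R := qsumR (fun a1 a2 b1 b2 => INR a1 * Cmod (P a1 a2 b1 b2)).
Definition qnorm2 (P : qpoly) : R := qsumR (fun a1 a2 b1 b2 => INR a2 * Cmod (P a1 a2 b1 b2)).
Definition qstar (P : qpoly) : R := Rmax (qnorm1 P) (qnorm2 P).

(** * The specific Hamiltonian.
    Phi 0 0 = phi_1^-, Phi 0 1 = phi_1^+, Phi 1 0 = phi_2^-, Phi 1 1 = phi_2^+. *)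
Definition fpot (Phi : mat2) (M3 N3 : R) (q1 q2 : C) : C :=
  (RtoC (M3 / 4) * (RtoC (Phi 0%nat 0%nat) * q1 + RtoC (Phi 0%nat 1%nat) * q2) ^ 4
   + RtoC (N3 / 4) * (RtoC (Phi 1%nat 0%nat) * q1 + RtoC (Phi 1%nat 1%nat) * q2) ^ 4)%C.

Definition Gfun (Phi : mat2) (wm wp M3 N3 : R) (z1 z2 : C) : C :=
  fpot Phi M3 N3 ((z1 + Cconj z1) / RtoC (sqrt (2 * wm)))%C
                 ((z2 + Cconj z2) / RtoC (sqrt (2 * wp)))%C.

Definition multinom4 (a1 a2 b1 b2 : nat) : R :=
  INR (fact 4) / INR (fact a1 * fact a2 * fact b1 * fact b2).

(* The coefficients G_{alpha,beta} of G, obtained by multinomial expansion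
   (see Gfun_expansion below). *)
Definition Gc (Phi : mat2) (wm wp M3 N3 : R) : qpoly := fun a1 a2 b1 b2 =>
  RtoC (multinom4 a1 a2 b1 b2 *
   (M3 / 4 * (Phi 0%nat 0%nat / sqrt (2 * wm)) ^ (a1 + b1)
           * (Phi 0%nat 1%nat / sqrt (2 * wp)) ^ (a2 + b2)
  + N3 / 4 * (Phi 1%nat 0%nat / sqrt (2 * wm)) ^ (a1 + b1)
           * (Phi 1%nat 1%nat / sqrt (2 * wp)) ^ (a2 + b2))).

Definition Nfun (wm wp : R) (z1 z2 : C) : C :=
  RtoC (wm * Cmod z1 ^ 2 + wp * Cmod z2 ^ 2).

Definition Hfun (Phi : mat2) (wm wp M3 N3 : R) (z1 z2 : C) : C :=
  (Nfun wm wp z1 z2 + Gfun Phi wm wp M3 N3 z1 z2)%C.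

(* bar H_4 = sum_{|alpha|=2} G_{alpha,alpha} |z1|^{2 alpha1} |z2|^{2 alpha2},
   as a quartic polynomial: coefficient G_{alpha,alpha} on (alpha,alpha), 0 else *)
Definition H4bar (Phi : mat2) (wm wp M3 N3 : R) : qpoly := fun a1 a2 b1 b2 =>
  if andb (Nat.eqb a1 b1) (Nat.eqb a2 b2) then Gc Phi wm wp M3 N3 a1 a2 b1 b2 else 0%C.

Definition Ghat (Phi : mat2) (wm wp M3 N3 : R) : qpoly := fun a1 a2 b1 b2 =>
  (Gc Phi wm wp M3 N3 a1 a2 b1 b2 - H4bar Phi wm wp M3 N3 a1 a2 b1 b2)%C.

Definition wdot (wm wp : R) (a1 a2 b1 b2 : nat) : R :=
  wm * (INR a1 - INR b1) + wp * (INR a2 - INR b2).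

Definition Sc (Phi : mat2) (wm wp M3 N3 : R) : qpoly := fun a1 a2 b1 b2 =>
  if andb (Nat.eqb a1 b1) (Nat.eqb a2 b2) then 0%C
  else (Ci * Gc Phi wm wp M3 N3 a1 a2 b1 b2 / RtoC (wdot wm wp a1 a2 b1 b2))%C.

Definition flow_sol (S : qpoly) (z1 z2 : C) (g1 g2 : R -> C) : Prop :=
  g1 0 = z1 /\ g2 0 = z2 /\
  (forall t, 0 < t < 1 ->
     is_derive g1 t ((- Ci) * dzb1 S (g1 t) (g2 t))%C /\
     is_derive g2 t ((- Ci) * dzb2 S (g1 t) (g2 t))%C) /\
  filterlim g1 (at_right 0) (locally (g1 0)) /\
  filterlim g2 (at_right 0) (locally (g2 0)) /\
  filterlim g1 (at_left 1) (locally (g1 1)) /\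
  filterlim g2 (at_left 1) (locally (g2 1)).

Lemma Gfun_expansion (Phi : mat2) (wm wp M3 N3 : R) (z1 z2 : C) :
    0 < wm -> 0 < wp ->
    Gfun Phi wm wp M3 N3 z1 z2 = qeval (Gc Phi wm wp M3 N3) z1 z2.
  Proof.
    intros Hm Hp.
    assert (s1 : sqrt (2*wm) <> 0) by (apply Rgt_not_eq, sqrt_lt_R0; lra).
    assert (s2 : sqrt (2*wp) <> 0) by (apply Rgt_not_eq, sqrt_lt_R0; lra).
    unfold Gfun, fpot, qeval, qsumC, Gc, multinom4. simpl.
    set (a := sqrt (2*wm)) in *. set (b := sqrt (2*wp)) in *.
    rewrite ?RtoC_mult, ?RtoC_plus, ?RtoC_pow.
    generalize (Cconj z1) (Cconj z2); intros u v.
    rewrite ?RtoC_div, ?RtoC_mult, ?RtoC_plus, ?RtoC_pow.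
    assert (a' : RtoC a <> 0%C) by (intro H; apply s1; injection H; auto).
    assert (b' : RtoC b <> 0%C) by (intro H; apply s2; injection H; auto).
    rewrite !RtoC_div.
    all: try (apply not_0_INR; simpl; lia).
    all: try (apply Rgt_not_eq; apply lt_0_INR; simpl; lia).
    simpl INR.
    field. auto.
    all: first [assumption | lra].
  Qed.

(* Main.v *)
Require Import Defs.
From Stdlib Require Import Reals Lra Lia List Arith FunctionalExtensionality.
From Coquelicot Require Import Coquelicot.
Import ListNotations.
Open Scope R_scope.


Definition idx := (nat * nat * nat * nat)%type.
Definition lsumC (l : list idx) (F : nat -> nat -> nat -> nat -> C) : C :=
  fold_right Cplus 0%C (map (fun '(a1, a2, b1, b2) => F a1 a2 b1 b2) l).
Definition lsumR (l : list idx) (F : nat -> nat -> nat -> nat -> R) : R :=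
  fold_right Rplus 0 (map (fun '(a1, a2, b1, b2) => F a1 a2 b1 b2) l).

Lemma qsumC_l F : qsumC F = lsumC quartic_idx F. Proof. reflexivity. Qed.
Lemma qsumR_l F : qsumR F = lsumR quartic_idx F. Proof. reflexivity. Qed.

Lemma lsumC_ext_in l F G :
  (forall a1 a2 b1 b2, In (a1, a2, b1, b2) l -> F a1 a2 b1 b2 = G a1 a2 b1 b2) ->
  lsumC l F = lsumC l G.
Proof.
  induction l as [|[[[a1 a2] b1] b2] l IH]; intros H; simpl; auto.
  unfold lsumC in *; simpl. rewrite H by (left; auto). f_equal. apply IH.
  intros; apply H; right; auto.
Qed.

Lemma lsumR_le l F G :
  (forall a1 a2 b1 b2, In (a1, a2, b1, b2) l -> F a1 a2 b1 b2 <= G a1 a2 b1 b2) ->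
  lsumR l F <= lsumR l G.
Proof.
  induction l as [|[[[a1 a2] b1] b2] l IH]; intros H; unfold lsumR; simpl; try lra.
  apply Rplus_le_compat. apply H; left; auto. apply IH. intros; apply H; right; auto.
Qed.

Lemma lsumR_ext_in l F G :
  (forall a1 a2 b1 b2, In (a1, a2, b1, b2) l -> F a1 a2 b1 b2 = G a1 a2 b1 b2) ->
  lsumR l F = lsumR l G.
Proof.
  intros H; apply Rle_antisym; apply lsumR_le; intros; rewrite H; auto; lra.
Qed.

Lemma lsumC_plus l F G :
  lsumC l (fun a1 a2 b1 b2 => F a1 a2 b1 b2 + G a1 a2 b1 b2)%C = (lsumC l F + lsumC l G)%C.
Proof.
  induction l as [|[[[a1 a2] b1] b2] l IH]; unfold lsumC in *; simpl.
  - ring.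
  - rewrite IH. ring.
Qed.

Lemma lsumC_scal l c F :
  lsumC l (fun a1 a2 b1 b2 => c * F a1 a2 b1 b2)%C = (c * lsumC l F)%C.
Proof.
  induction l as [|[[[a1 a2] b1] b2] l IH]; unfold lsumC in *; simpl.
  - ring.
  - rewrite IH. ring.
Qed.

Lemma lsumR_plus l F G :
  lsumR l (fun a1 a2 b1 b2 => F a1 a2 b1 b2 + G a1 a2 b1 b2) = lsumR l F + lsumR l G.
Proof.
  induction l as [|[[[a1 a2] b1] b2] l IH]; unfold lsumR in *; simpl.
  - ring.
  - rewrite IH. ring.
Qed.

Lemma lsumR_scal l c F :
  lsumR l (fun a1 a2 b1 b2 => c * F a1 a2 b1 b2) = c * lsumR l F.
Proof.
  induction l as [|[[[a1 a2] b1] b2] l IH]; unfold lsumR in *; simpl.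
  - ring.
  - rewrite IH. ring.
Qed.

Lemma lsumR_ge0 l F :
  (forall a1 a2 b1 b2, In (a1, a2, b1, b2) l -> 0 <= F a1 a2 b1 b2) -> 0 <= lsumR l F.
Proof.
  intros H. replace 0 with (lsumR l (fun _ _ _ _ => 0)).
  apply lsumR_le; auto.
  clear. induction l as [|[[[a1 a2] b1] b2] l IH]; unfold lsumR in *; simpl; auto. rewrite IH; ring.
Qed.

Lemma lsumC_conj l F :
  Cconj (lsumC l F) = lsumC l (fun a1 a2 b1 b2 => Cconj (F a1 a2 b1 b2)).
Proof.
  induction l as [|[[[a1 a2] b1] b2] l IH]; unfold lsumC in *; simpl.
  - unfold Cconj; simpl. apply injective_projections; simpl; lra.
  - rewrite Cplus_conj, IH. reflexivity.
Qed.

Lemma lsumC_Cmod l F :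
  Cmod (lsumC l F) <= lsumR l (fun a1 a2 b1 b2 => Cmod (F a1 a2 b1 b2)).
Proof.
  induction l as [|[[[a1 a2] b1] b2] l IH]; unfold lsumC, lsumR in *; simpl.
  - rewrite Cmod_0; lra.
  - eapply Rle_trans. apply Cmod_triangle. lra.
Qed.

Lemma qsumC_swap (F : nat -> nat -> nat -> nat -> C) :
  qsumC F = qsumC (fun a1 a2 b1 b2 => F b1 b2 a1 a2).
Proof. unfold qsumC. simpl. ring. Qed.

Lemma qsumR_swap (F : nat -> nat -> nat -> nat -> R) :
  qsumR F = qsumR (fun a1 a2 b1 b2 => F b1 b2 a1 a2).
Proof. unfold qsumR. simpl. ring. Qed.

Lemma quartic_in a1 a2 b1 b2 : In (a1, a2, b1, b2) quartic_idx -> (a1 + a2 + b1 + b2 = 4)%nat.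
Proof.
  intros H. unfold quartic_idx in H. apply filter_In in H. destruct H as [_ H].
  apply Nat.eqb_eq in H. exact H.
Qed.


Lemma Gc_sym Phi wm wp M3 N3 a1 a2 b1 b2 :
  Gc Phi wm wp M3 N3 b1 b2 a1 a2 = Gc Phi wm wp M3 N3 a1 a2 b1 b2.
Proof.
  unfold Gc, multinom4.
  replace (fact b1 * fact b2 * fact a1 * fact a2)%nat with (fact a1 * fact a2 * fact b1 * fact b2)%nat by ring.
  rewrite (Nat.add_comm b1 a1), (Nat.add_comm b2 a2). reflexivity.
Qed.

Lemma Gc_real Phi wm wp M3 N3 a1 a2 b1 b2 :
  Gc Phi wm wp M3 N3 a1 a2 b1 b2 = RtoC (Re (Gc Phi wm wp M3 N3 a1 a2 b1 b2)).
Proof. reflexivity. Qed.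

Lemma wdot_swap wm wp a1 a2 b1 b2 : wdot wm wp b1 b2 a1 a2 = - wdot wm wp a1 a2 b1 b2.
Proof. unfold wdot; ring. Qed.

Lemma conj_aux (g w : R) :
  Cconj (Ci * RtoC g / RtoC w)%C = (Ci * RtoC g / RtoC (- w))%C.
Proof.
  unfold Cconj, Cdiv, Cinv, Cmult, RtoC, Ci; simpl.
  destruct (Req_dec w 0) as [->|Hw].
  - apply injective_projections; simpl; rewrite ?Ropp_0; unfold Rdiv;
    replace (0 ^ 2 + 0 ^ 2) with 0 by ring; rewrite ?Rinv_0; ring.
  - apply injective_projections; simpl; field; auto.
Qed.

Lemma Sc_conj Phi wm wp M3 N3 a1 a2 b1 b2 :
  Cconj (Sc Phi wm wp M3 N3 b1 b2 a1 a2) = Sc Phi wm wp M3 N3 a1 a2 b1 b2.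
Proof.
  unfold Sc. rewrite (Nat.eqb_sym b1 a1), (Nat.eqb_sym b2 a2).
  destruct (Nat.eqb a1 b1 && Nat.eqb a2 b2)%bool.
  - unfold Cconj; simpl. apply injective_projections; simpl; lra.
  - rewrite Gc_sym, (Gc_real _ _ _ _ _ a1), conj_aux, wdot_swap, Ropp_involutive.
    reflexivity.
Qed.

Lemma Sc_mod_sym Phi wm wp M3 N3 a1 a2 b1 b2 :
  Cmod (Sc Phi wm wp M3 N3 b1 b2 a1 a2) = Cmod (Sc Phi wm wp M3 N3 a1 a2 b1 b2).
Proof. rewrite <- Sc_conj, Cmod_conj. reflexivity. Qed.

Lemma H4_sym Phi wm wp M3 N3 a1 a2 b1 b2 :
  H4bar Phi wm wp M3 N3 b1 b2 a1 a2 = H4bar Phi wm wp M3 N3 a1 a2 b1 b2.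
Proof.
  unfold H4bar. rewrite (Nat.eqb_sym b1 a1), (Nat.eqb_sym b2 a2), Gc_sym. reflexivity.
Qed.

Lemma Gh_sym Phi wm wp M3 N3 a1 a2 b1 b2 :
  Ghat Phi wm wp M3 N3 b1 b2 a1 a2 = Ghat Phi wm wp M3 N3 a1 a2 b1 b2.
Proof. unfold Ghat. rewrite H4_sym, Gc_sym. reflexivity. Qed.

Lemma pow_bound (x : C) n rho : Cmod x <= rho -> Cmod (x ^ n) <= rho ^ n.
Proof.
  intros H. rewrite Cmod_pow. apply pow_incr. split; auto. apply Cmod_ge_0.
Qed.

Lemma mono_bound (c x1 x2 x3 x4 : C) e1 e2 e3 e4 rho :
  Cmod x1 <= rho -> Cmod x2 <= rho -> Cmod x3 <= rho -> Cmod x4 <= rho ->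
  Cmod (c * x1 ^ e1 * x2 ^ e2 * x3 ^ e3 * x4 ^ e4) <= Cmod c * rho ^ (e1 + e2 + e3 + e4).
Proof.
  intros H1 H2 H3 H4. rewrite !Cmod_mult, !pow_add.
  assert (rho0 : 0 <= rho) by (eapply Rle_trans; [apply Cmod_ge_0|apply H1]).
  pose proof (Cmod_ge_0 c).
  pose proof (pow_bound x1 e1 rho H1). pose proof (pow_bound x2 e2 rho H2).
  pose proof (pow_bound x3 e3 rho H3). pose proof (pow_bound x4 e4 rho H4).
  pose proof (Cmod_ge_0 (x1^e1)). pose proof (Cmod_ge_0 (x2^e2)).
  pose proof (Cmod_ge_0 (x3^e3)). pose proof (Cmod_ge_0 (x4^e4)).
  rewrite !Rmult_assoc. apply Rmult_le_compat_l; auto.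
  apply Rmult_le_compat; try apply Rmult_le_pos; try apply Rmult_le_pos; auto.
  apply Rmult_le_compat; try apply Rmult_le_pos; auto.
  apply Rmult_le_compat; auto.
Qed.

Lemma term_bound (P : C) (k : nat) (x1 x2 x3 x4 : C) e1 e2 e3 e4 rho :
  0 <= rho -> Cmod x1 <= rho -> Cmod x2 <= rho -> Cmod x3 <= rho -> Cmod x4 <= rho ->
  (k = 0 \/ e1 + e2 + e3 + e4 = 3)%nat ->
  Cmod (P * RtoC (INR k) * x1 ^ e1 * x2 ^ e2 * x3 ^ e3 * x4 ^ e4) <= INR k * Cmod P * rho ^ 3.
Proof.
  intros r0 H1 H2 H3 H4 Hk.
  eapply Rle_trans. apply mono_bound; eauto.
  rewrite Cmod_mult, Cmod_R, Rabs_right by (apply Rle_ge, pos_INR).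
  destruct Hk as [Hk|Hk]; rewrite Hk. simpl; lra. right; ring.
Qed.

Definition wt1 (P : qpoly) := fun a1 a2 b1 b2 => INR a1 * Cmod (P a1 a2 b1 b2).
Definition wt2 (P : qpoly) := fun a1 a2 b1 b2 => INR a2 * Cmod (P a1 a2 b1 b2).
Definition wtb1 (P : qpoly) := fun a1 a2 b1 b2 => INR b1 * Cmod (P a1 a2 b1 b2).
Definition wtb2 (P : qpoly) := fun a1 a2 b1 b2 => INR b2 * Cmod (P a1 a2 b1 b2).

Lemma dz1_bound P z1 z2 rho : 0 <= rho -> Cmod z1 <= rho -> Cmod z2 <= rho ->
  Cmod (dz1 P z1 z2) <= qsumR (wt1 P) * rho ^ 3.
Proof.
  intros r0 H1 H2. unfold dz1. rewrite qsumC_l.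
  eapply Rle_trans. apply lsumC_Cmod. rewrite (qsumR_l (_ P)), (Rmult_comm (lsumR _ _)), <- lsumR_scal.
  apply lsumR_le. intros a1 a2 b1 b2 Hin. apply quartic_in in Hin.
  eapply Rle_trans. apply term_bound; eauto; rewrite ?Cmod_conj; auto. lia.
  unfold wt1; right; ring.
Qed.

Lemma dz2_bound P z1 z2 rho : 0 <= rho -> Cmod z1 <= rho -> Cmod z2 <= rho ->
  Cmod (dz2 P z1 z2) <= qsumR (wt2 P) * rho ^ 3.
Proof.
  intros r0 H1 H2. unfold dz2. rewrite qsumC_l.
  eapply Rle_trans. apply lsumC_Cmod. rewrite (qsumR_l (_ P)), (Rmult_comm (lsumR _ _)), <- lsumR_scal.
  apply lsumR_le. intros a1 a2 b1 b2 Hin. apply quartic_in in Hin.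
  eapply Rle_trans. apply term_bound; eauto; rewrite ?Cmod_conj; auto. lia.
  unfold wt2; right; ring.
Qed.

Lemma dzb1_bound P z1 z2 rho : 0 <= rho -> Cmod z1 <= rho -> Cmod z2 <= rho ->
  Cmod (dzb1 P z1 z2) <= qsumR (wtb1 P) * rho ^ 3.
Proof.
  intros r0 H1 H2. unfold dzb1. rewrite qsumC_l.
  eapply Rle_trans. apply lsumC_Cmod. rewrite (qsumR_l (_ P)), (Rmult_comm (lsumR _ _)), <- lsumR_scal.
  apply lsumR_le. intros a1 a2 b1 b2 Hin. apply quartic_in in Hin.
  eapply Rle_trans. apply term_bound; eauto; rewrite ?Cmod_conj; auto. lia.
  unfold wtb1; right; ring.
Qed.

Lemma dzb2_bound P z1 z2 rho : 0 <= rho -> Cmod z1 <= rho -> Cmod z2 <= rho ->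
  Cmod (dzb2 P z1 z2) <= qsumR (wtb2 P) * rho ^ 3.
Proof.
  intros r0 H1 H2. unfold dzb2. rewrite qsumC_l.
  eapply Rle_trans. apply lsumC_Cmod. rewrite (qsumR_l (_ P)), (Rmult_comm (lsumR _ _)), <- lsumR_scal.
  apply lsumR_le. intros a1 a2 b1 b2 Hin. apply quartic_in in Hin.
  eapply Rle_trans. apply term_bound; eauto; rewrite ?Cmod_conj; auto. lia.
  unfold wtb2; right; ring.
Qed.

Lemma wtb1_sym (P : qpoly) :
  (forall a1 a2 b1 b2, Cmod (P b1 b2 a1 a2) = Cmod (P a1 a2 b1 b2)) ->
  qsumR (wtb1 P) = qnorm1 P.
Proof.
  intros H. unfold qnorm1. rewrite qsumR_swap. unfold wtb1.
  f_equal. repeat (apply functional_extensionality; intro). rewrite H. reflexivity.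
Qed.

Lemma wtb2_sym (P : qpoly) :
  (forall a1 a2 b1 b2, Cmod (P b1 b2 a1 a2) = Cmod (P a1 a2 b1 b2)) ->
  qsumR (wtb2 P) = qnorm2 P.
Proof.
  intros H. unfold qnorm2. rewrite qsumR_swap. unfold wtb2.
  f_equal. repeat (apply functional_extensionality; intro). rewrite H. reflexivity.
Qed.

Lemma wt1_q P : qsumR (wt1 P) = qnorm1 P. Proof. reflexivity. Qed.
Lemma wt2_q P : qsumR (wt2 P) = qnorm2 P. Proof. reflexivity. Qed.


Lemma Cpow_S (x : C) n : (x ^ S n = x * x ^ n)%C.
Proof. reflexivity. Qed.

Lemma Cpow_lip (x y : C) n rho : 0 <= rho -> Cmod x <= rho -> Cmod y <= rho ->
  Cmod (x ^ n - y ^ n) <= INR n * (1 + rho) ^ n * Cmod (x - y).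
Proof.
  intros r0 Hx Hy. induction n as [|n IH].
  - replace (x ^ 0 - y ^ 0)%C with (RtoC 0) by (simpl; ring). rewrite Cmod_0. simpl. pose proof (Cmod_ge_0 (x - y)). lra.
  - rewrite !Cpow_S.
    replace (x * x ^ n - y * y ^ n)%C with (x * (x ^ n - y ^ n) + (x - y) * y ^ n)%C by ring.
    eapply Rle_trans. apply Cmod_triangle. rewrite !Cmod_mult.
    pose proof (pow_bound y n rho Hy).
    assert (rho ^ n <= (1 + rho) ^ n) by (apply pow_incr; lra).
    assert (0 <= Cmod (x - y)) by apply Cmod_ge_0.
    assert (0 <= (1+rho)^n) by (apply pow_le; lra).
    assert (0 <= INR n) by apply pos_INR.
    assert (Cmod x * Cmod (x ^ n - y ^ n) <= (1 + rho) * (INR n * (1 + rho) ^ n * Cmod (x - y))).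
    { apply Rmult_le_compat; try apply Cmod_ge_0; try lra. }
    assert (Cmod (x - y) * Cmod (y ^ n) <= Cmod (x - y) * (1 + rho) ^ n).
    { apply Rmult_le_compat_l; lra. }
    rewrite S_INR. simpl pow.
    assert ((1 + rho) ^ n <= (1 + rho) * (1 + rho) ^ n).
    { pose proof (Rmult_le_compat_r ((1+rho)^n) 1 (1+rho)). lra. }
    nra.
Qed.

Lemma Cmul_lip (X Y U V : C) A B DX DU :
  Cmod X <= A -> Cmod Y <= A -> Cmod (X - Y) <= DX ->
  Cmod U <= B -> Cmod V <= B -> Cmod (U - V) <= DU ->
  Cmod (X * U - Y * V) <= A * DU + DX * B.
Proof.
  intros. replace (X * U - Y * V)%C with (X * (U - V) + (X - Y) * V)%C by ring.
  eapply Rle_trans. apply Cmod_triangle. rewrite !Cmod_mult.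
  pose proof (Cmod_ge_0 X). pose proof (Cmod_ge_0 V). pose proof (Cmod_ge_0 (U - V)).
  pose proof (Cmod_ge_0 (X - Y)).
  apply Rplus_le_compat; apply Rmult_le_compat; auto.
Qed.

Lemma pow_le_4 rho e : 0 <= rho -> (e <= 4)%nat -> (1 + rho) ^ e <= (1 + rho) ^ 4.
Proof.
  intros. apply Rle_pow; [lra|auto].
Qed.

Lemma Cpow_bnd4 (x : C) e rho : 0 <= rho -> Cmod x <= rho -> (e <= 4)%nat ->
  Cmod (x ^ e) <= (1 + rho) ^ 4.
Proof.
  intros. eapply Rle_trans. apply pow_bound; eauto.
  eapply Rle_trans. apply pow_incr with (y := 1 + rho). split; [|lra].
  eapply Rle_trans; [apply Cmod_ge_0|eauto].
  apply pow_le_4; auto.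
Qed.

Lemma Cpow_lip4 (x y : C) e rho d : 0 <= rho -> Cmod x <= rho -> Cmod y <= rho ->
  Cmod (x - y) <= d -> (e <= 4)%nat ->
  Cmod (x ^ e - y ^ e) <= 4 * (1 + rho) ^ 4 * d.
Proof.
  intros. eapply Rle_trans. apply Cpow_lip; eauto.
  pose proof (Cmod_ge_0 (x - y)).
  apply Rmult_le_compat; auto.
  apply Rmult_le_pos. apply pos_INR. apply pow_le; lra.
  apply Rmult_le_compat. apply pos_INR. apply pow_le; lra.
  replace 4 with (INR 4) by (simpl; ring). apply le_INR; auto.
  apply pow_le_4; auto.
Qed.

Lemma mono_lip (c x1 x2 x3 x4 y1 y2 y3 y4 : C) e1 e2 e3 e4 rho d :
  0 <= rho ->
  Cmod x1 <= rho -> Cmod x2 <= rho -> Cmod x3 <= rho -> Cmod x4 <= rho ->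
  Cmod y1 <= rho -> Cmod y2 <= rho -> Cmod y3 <= rho -> Cmod y4 <= rho ->
  Cmod (x1 - y1) <= d -> Cmod (x2 - y2) <= d -> Cmod (x3 - y3) <= d -> Cmod (x4 - y4) <= d ->
  (e1 <= 4)%nat -> (e2 <= 4)%nat -> (e3 <= 4)%nat -> (e4 <= 4)%nat ->
  Cmod (c * x1 ^ e1 * x2 ^ e2 * x3 ^ e3 * x4 ^ e4 - c * y1 ^ e1 * y2 ^ e2 * y3 ^ e3 * y4 ^ e4)
   <= Cmod c * (16 * ((1 + rho) ^ 4) ^ 4 * d).
Proof.
  intros r0 Hx1 Hx2 Hx3 Hx4 Hy1 Hy2 Hy3 Hy4 D1 D2 D3 D4 E1 E2 E3 E4.
  set (K := (1 + rho) ^ 4).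
  assert (K1 : 1 <= K). { unfold K. apply pow_R1_Rle. lra. }
  assert (d0 : 0 <= d). { eapply Rle_trans; [apply Cmod_ge_0|apply D1]. }
  replace (c * x1 ^ e1 * x2 ^ e2 * x3 ^ e3 * x4 ^ e4 - c * y1 ^ e1 * y2 ^ e2 * y3 ^ e3 * y4 ^ e4)%C
    with (c * (x1 ^ e1 * x2 ^ e2 * x3 ^ e3 * x4 ^ e4 - y1 ^ e1 * y2 ^ e2 * y3 ^ e3 * y4 ^ e4))%C by ring.
  rewrite Cmod_mult. apply Rmult_le_compat_l. apply Cmod_ge_0.
  assert (P1 : Cmod (x1 ^ e1 * x2 ^ e2 - y1 ^ e1 * y2 ^ e2) <= K * (4 * K * d) + 4 * K * d * K).
  { apply Cmul_lip; try apply Cpow_bnd4; auto; apply Cpow_lip4; auto. }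
  assert (B1 : forall (u v : C), Cmod u <= rho -> Cmod v <= rho -> Cmod (u ^ e1 * v ^ e2) <= K * K).
  { intros u v Hu Hv. rewrite Cmod_mult. apply Rmult_le_compat; try apply Cmod_ge_0; apply Cpow_bnd4; auto. }
  assert (P2 : Cmod (x1 ^ e1 * x2 ^ e2 * x3 ^ e3 - y1 ^ e1 * y2 ^ e2 * y3 ^ e3)
     <= (K * K) * (4 * K * d) + (K * (4 * K * d) + 4 * K * d * K) * K).
  { apply Cmul_lip; auto; try apply Cpow_bnd4; auto; apply Cpow_lip4; auto. }
  assert (B2 : forall (u v w : C), Cmod u <= rho -> Cmod v <= rho -> Cmod w <= rho ->
     Cmod (u ^ e1 * v ^ e2 * w ^ e3) <= K * K * K).
  { intros u v w Hu Hv Hw. rewrite Cmod_mult. apply Rmult_le_compat; try apply Cmod_ge_0; auto. apply Cpow_bnd4; auto. }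
  eapply Rle_trans. eapply (Cmul_lip _ _ _ _ (K*K*K) K _ (4*K*d)).
  apply B2; auto. apply B2; auto. apply P2.
  apply Cpow_bnd4; auto. apply Cpow_bnd4; auto. apply Cpow_lip4; auto.
  right. unfold K. ring.
Qed.

Lemma lsumC_minus l F G :
  (lsumC l F - lsumC l G)%C = lsumC l (fun a1 a2 b1 b2 => F a1 a2 b1 b2 - G a1 a2 b1 b2)%C.
Proof.
  induction l as [|[[[a1 a2] b1] b2] l IH]; unfold lsumC in *; simpl.
  - ring.
  - rewrite <- IH. ring.
Qed.

Lemma lsumR_scal_r l c F :
  lsumR l (fun a1 a2 b1 b2 => F a1 a2 b1 b2 * c) = lsumR l F * c.
Proof.
  induction l as [|[[[a1 a2] b1] b2] l IH]; unfold lsumR in *; simpl.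
  - ring.
  - rewrite IH. ring.
Qed.

Definition LipC (P : qpoly) rho :=
  4 * qsumR (fun a1 a2 b1 b2 => Cmod (P a1 a2 b1 b2)) * (16 * ((1 + rho) ^ 4) ^ 4).

Lemma LipC_ge0 P rho : 0 <= rho -> 0 <= LipC P rho.
Proof.
  intros. unfold LipC. apply Rmult_le_pos. apply Rmult_le_pos. lra.
  rewrite qsumR_l. apply lsumR_ge0. intros; apply Cmod_ge_0.
  apply Rmult_le_pos. lra. apply pow_le, pow_le. lra.
Qed.

Lemma cnorm2_l a b : Cmod a <= cnorm2 a b. Proof. apply Rmax_l. Qed.
Lemma cnorm2_r a b : Cmod b <= cnorm2 a b. Proof. apply Rmax_r. Qed.
Lemma cnorm2_le a b x : Cmod a <= x -> Cmod b <= x -> cnorm2 a b <= x.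
Proof. intros; unfold cnorm2; apply Rmax_lub; auto. Qed.

Lemma in_le4 a1 a2 b1 b2 : In (a1, a2, b1, b2) quartic_idx ->
  (a1 <= 4 /\ a2 <= 4 /\ b1 <= 4 /\ b2 <= 4)%nat.
Proof. intros H; apply quartic_in in H; lia. Qed.

Lemma term_lip (P : C) (k : nat) (x1 x2 x3 x4 y1 y2 y3 y4 : C) e1 e2 e3 e4 rho d :
  0 <= rho ->
  Cmod x1 <= rho -> Cmod x2 <= rho -> Cmod x3 <= rho -> Cmod x4 <= rho ->
  Cmod y1 <= rho -> Cmod y2 <= rho -> Cmod y3 <= rho -> Cmod y4 <= rho ->
  Cmod (x1 - y1) <= d -> Cmod (x2 - y2) <= d -> Cmod (x3 - y3) <= d -> Cmod (x4 - y4) <= d ->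
  (e1 <= 4)%nat -> (e2 <= 4)%nat -> (e3 <= 4)%nat -> (e4 <= 4)%nat -> (k <= 4)%nat ->
  Cmod (P * RtoC (INR k) * x1 ^ e1 * x2 ^ e2 * x3 ^ e3 * x4 ^ e4
        - P * RtoC (INR k) * y1 ^ e1 * y2 ^ e2 * y3 ^ e3 * y4 ^ e4)
   <= 4 * Cmod P * (16 * ((1 + rho) ^ 4) ^ 4) * d.
Proof.
  intros. eapply Rle_trans. apply mono_lip; eauto.
  assert (0 <= d) by (eapply Rle_trans; [apply Cmod_ge_0|eauto]).
  rewrite Cmod_mult, Cmod_R, Rabs_right by (apply Rle_ge, pos_INR).
  assert (INR k <= 4) by (replace 4 with (INR 4) by (simpl; ring); apply le_INR; auto).
  pose proof (Cmod_ge_0 P).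
  assert (0 <= 16 * ((1 + rho) ^ 4) ^ 4 * d).
  { apply Rmult_le_pos; auto. apply Rmult_le_pos. lra. apply pow_le, pow_le. lra. }
  replace (4 * Cmod P * (16 * ((1 + rho) ^ 4) ^ 4) * d) with (Cmod P * 4 * (16 * ((1 + rho) ^ 4) ^ 4 * d)) by ring.
  apply Rmult_le_compat_r; auto. apply Rmult_le_compat_l; auto.
Qed.

Lemma dzb1_lip P z1 z2 w1 w2 rho : 0 <= rho ->
  Cmod z1 <= rho -> Cmod z2 <= rho -> Cmod w1 <= rho -> Cmod w2 <= rho ->
  Cmod (dzb1 P z1 z2 - dzb1 P w1 w2) <= LipC P rho * cnorm2 (z1 - w1) (z2 - w2).
Proof.
  intros r0 H1 H2 H3 H4. unfold dzb1. rewrite !qsumC_l, lsumC_minus.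
  eapply Rle_trans. apply lsumC_Cmod. unfold LipC. change (qsumR ?F) with (lsumR quartic_idx F).
  rewrite <- lsumR_scal, <- !lsumR_scal_r.
  apply lsumR_le. intros a1 a2 b1 b2 Hin. apply in_le4 in Hin.
  eapply Rle_trans. apply term_lip; eauto; rewrite ?Cmod_conj; auto;
   try (rewrite <- Cminus_conj, Cmod_conj); try apply cnorm2_l; try apply cnorm2_r; lia.
  right; ring.
Qed.

Lemma dzb2_lip P z1 z2 w1 w2 rho : 0 <= rho ->
  Cmod z1 <= rho -> Cmod z2 <= rho -> Cmod w1 <= rho -> Cmod w2 <= rho ->
  Cmod (dzb2 P z1 z2 - dzb2 P w1 w2) <= LipC P rho * cnorm2 (z1 - w1) (z2 - w2).
Proof.
  intros r0 H1 H2 H3 H4. unfold dzb2. rewrite !qsumC_l, lsumC_minus.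
  eapply Rle_trans. apply lsumC_Cmod. unfold LipC. change (qsumR ?F) with (lsumR quartic_idx F).
  rewrite <- lsumR_scal, <- !lsumR_scal_r.
  apply lsumR_le. intros a1 a2 b1 b2 Hin. apply in_le4 in Hin.
  eapply Rle_trans. apply term_lip; eauto; rewrite ?Cmod_conj; auto;
   try (rewrite <- Cminus_conj, Cmod_conj); try apply cnorm2_l; try apply cnorm2_r; lia.
  right; ring.
Qed.


Lemma is_derive_C_fst (h : R -> C) t l :
  is_derive h t l -> is_derive (fun t => fst (h t)) t (fst l).
Proof.
  intros H. unfold is_derive in *.
  eapply filterdiff_ext_lin.
  apply (filterdiff_comp' h (fun x : C => fst x) t _ (fun x => fst x) H).
  apply filterdiff_linear, is_linear_fst.
  intros y; simpl. reflexivity.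
Qed.

Lemma is_derive_C_snd (h : R -> C) t l :
  is_derive h t l -> is_derive (fun t => snd (h t)) t (snd l).
Proof.
  intros H. unfold is_derive in *.
  eapply filterdiff_ext_lin.
  apply (filterdiff_comp' h (fun x : C => snd x) t _ (fun x => snd x) H).
  apply filterdiff_linear, is_linear_snd.
  intros y; simpl. reflexivity.
Qed.

Lemma is_derive_C_pair (u v : R -> R) t a b :
  is_derive u t a -> is_derive v t b -> is_derive (fun t => (u t, v t) : C) t ((a, b) : C).
Proof.
  intros Hu Hv. unfold is_derive in *.
  eapply filterdiff_ext_lin.
  apply (filterdiff_comp'_2 u v (fun x y => (x, y) : C) t _ _ (fun x y => (x, y) : C) Hu Hv).
  eapply filterdiff_ext; [|eapply filterdiff_ext_lin; [apply filterdiff_id|]].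
  intros [x y]; reflexivity. intros [x y]; reflexivity.
  intros y; reflexivity.
Qed.

Lemma is_derive_C_intro (h : R -> C) t (a b : R) :
  is_derive (fun t => fst (h t)) t a -> is_derive (fun t => snd (h t)) t b ->
  is_derive h t ((a, b) : C).
Proof.
  intros H1 H2. eapply is_derive_ext; [|apply (is_derive_C_pair _ _ t a b H1 H2)].
  intros s; simpl. destruct (h s); reflexivity.
Qed.

Lemma is_derive_C_intro' (h : R -> C) t (l : C) :
  is_derive (fun t => fst (h t)) t (fst l) -> is_derive (fun t => snd (h t)) t (snd l) ->
  is_derive h t l.
Proof.
  intros H1 H2. destruct l as [a b]. apply is_derive_C_intro; auto.
Qed.

Ltac Ceq := apply injective_projections; simpl; ring.

Lemma is_derive_eq {V : NormedModule R_AbsRing} (f : R -> V) t l l' :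
  is_derive f t l -> l = l' -> is_derive f t l'.
Proof. intros H ->; auto. Qed.

Lemma is_derive_eqC (f : R -> C) t (l l' : C) :
  is_derive f t l -> l = l' -> is_derive f t l'.
Proof. intros H ->; auto. Qed.

Lemma is_derive_const0 (c : R) (t : R) : is_derive (fun _ : R => c) t 0.
Proof. eapply is_derive_eq. apply is_derive_const. reflexivity. Qed.

Lemma is_derive_Cconst (c : C) (t : R) : is_derive (fun _ : R => c) t (RtoC 0).
Proof.
  apply is_derive_C_intro'; simpl; apply is_derive_const0.
Qed.

Lemma is_derive_Cplus (f g : R -> C) t a b :
  is_derive f t a -> is_derive g t b -> is_derive (fun t => f t + g t)%C t (a + b)%C.
Proof.
  intros Hf Hg. apply is_derive_C_intro'; simpl.
  apply (is_derive_plus (fun t => fst (f t)) (fun t => fst (g t))); apply is_derive_C_fst; auto.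
  apply (is_derive_plus (fun t => snd (f t)) (fun t => snd (g t))); apply is_derive_C_snd; auto.
Qed.

Lemma is_derive_Cminus (f g : R -> C) t a b :
  is_derive f t a -> is_derive g t b -> is_derive (fun t => f t - g t)%C t (a - b)%C.
Proof.
  intros Hf Hg. apply is_derive_C_intro'; simpl.
  apply (is_derive_minus (fun t => fst (f t)) (fun t => fst (g t))); apply is_derive_C_fst; auto.
  apply (is_derive_minus (fun t => snd (f t)) (fun t => snd (g t))); apply is_derive_C_snd; auto.
Qed.

Lemma is_derive_Cmult (f g : R -> C) t a b :
  is_derive f t a -> is_derive g t b ->
  is_derive (fun t => f t * g t)%C t (a * g t + f t * b)%C.
Proof.
  intros Hf Hg.
  pose proof (is_derive_C_fst _ _ _ Hf) as F1. pose proof (is_derive_C_snd _ _ _ Hf) as F2.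
  pose proof (is_derive_C_fst _ _ _ Hg) as G1. pose proof (is_derive_C_snd _ _ _ Hg) as G2.
  apply is_derive_C_intro'; simpl.
  - pose proof (is_derive_mult _ _ _ _ _ F1 G1 Rmult_comm) as A.
    pose proof (is_derive_mult _ _ _ _ _ F2 G2 Rmult_comm) as B.
    pose proof (is_derive_minus _ _ _ _ _ A B) as AB.
    eapply is_derive_eq. exact AB.
    unfold minus, plus, opp, mult; simpl. ring.
  - pose proof (is_derive_mult _ _ _ _ _ F1 G2 Rmult_comm) as A.
    pose proof (is_derive_mult _ _ _ _ _ F2 G1 Rmult_comm) as B.
    pose proof (is_derive_plus _ _ _ _ _ A B) as AB.
    eapply is_derive_eq. exact AB.
    unfold minus, plus, opp, mult; simpl. ring.
Qed.

Lemma is_derive_Cconj (f : R -> C) t a :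
  is_derive f t a -> is_derive (fun t => Cconj (f t)) t (Cconj a).
Proof.
  intros Hf. apply is_derive_C_intro'; simpl.
  apply is_derive_C_fst; auto.
  apply (is_derive_opp (fun s => snd (f s))). apply is_derive_C_snd; auto.
Qed.

Lemma is_derive_Cscal (c : C) (f : R -> C) t a :
  is_derive f t a -> is_derive (fun t => c * f t)%C t (c * a)%C.
Proof.
  intros Hf. eapply is_derive_eqC. apply (is_derive_Cmult (fun _ : R => c) f t (RtoC 0) a); auto.
  apply is_derive_Cconst. ring.
Qed.

Lemma is_derive_Cpow (f : R -> C) t a n :
  is_derive f t a -> is_derive (fun t => f t ^ n)%C t (RtoC (INR n) * f t ^ (n - 1) * a)%C.
Proof.
  intros Hf. induction n as [|n IH].
  - apply (is_derive_ext (fun _ : R => RtoC 1)). intros; reflexivity.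
    eapply is_derive_eqC. apply (is_derive_Cconst (RtoC 1) t). simpl INR. 
    replace (RtoC 0 * f t ^ (0 - 1) * a)%C with (RtoC 0) by ring. reflexivity.
  - apply (is_derive_ext (fun t : R => f t * f t ^ n)%C). intros; reflexivity.
    eapply is_derive_eqC. apply (is_derive_Cmult f (fun t => f t ^ n)%C t a _ Hf IH).
    rewrite S_INR, RtoC_plus. destruct n as [|n].
    + simpl INR. simpl (1 - 1)%nat. simpl (0-1)%nat. ring.
    + replace (S (S n) - 1)%nat with (S n) by lia. replace (S n - 1)%nat with n by lia.
      change (f t ^ S n)%C with (f t * f t ^ n)%C. ring.
Qed.

Lemma is_derive_RtoC (u : R -> R) t a :
  is_derive u t a -> is_derive (fun t => RtoC (u t)) t (RtoC a).
Proof.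
  intros H. apply is_derive_C_intro'; simpl; auto. apply is_derive_const0.
Qed.


Lemma ballC_comp (u v : C) (e : R) : ball u e v -> Rabs (fst v - fst u) < e /\ Rabs (snd v - snd u) < e.
Proof. intros H. destruct H as [H1 H2]. split; [exact H1|exact H2]. Qed.

Lemma ballC_intro (u v : C) (e : R) : Rabs (fst v - fst u) < e -> Rabs (snd v - snd u) < e -> ball u e v.
Proof. intros H1 H2. split; [exact H1|exact H2]. Qed.

Lemma Cmod_le_abs (z : C) : Cmod z <= Rabs (fst z) + Rabs (snd z).
Proof.
  destruct z as [x y]. unfold Cmod; simpl.
  pose proof (Rabs_pos x). pose proof (Rabs_pos y).
  rewrite <- (sqrt_Rsqr (Rabs x + Rabs y)) by lra. apply sqrt_le_1_alt. unfold Rsqr.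
  assert (E1 : x * (x * 1) = Rabs x * Rabs x) by (rewrite <- Rabs_mult, Rabs_right; nra).
  assert (E2 : y * (y * 1) = Rabs y * Rabs y) by (rewrite <- Rabs_mult, Rabs_right; nra).
  rewrite E1, E2. nra.
Qed.

Lemma abs_fst_le (z : C) : Rabs (fst z) <= Cmod z.
Proof. eapply Rle_trans; [apply Rmax_l|apply Rmax_Cmod]. Qed.
Lemma abs_snd_le (z : C) : Rabs (snd z) <= Cmod z.
Proof. eapply Rle_trans; [apply Rmax_r|apply Rmax_Cmod]. Qed.

Definition ctsC (h : R -> C) c := forall eps, 0 < eps -> exists del, 0 < del /\
  forall t, Rabs (t - c) < del -> Cmod (h t - h c) < eps.
Definition rcont (h : R -> C) a := forall eps, 0 < eps -> exists del, 0 < del /\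
  forall t, a < t < a + del -> Cmod (h t - h a) < eps.
Definition lcont (h : R -> C) b := forall eps, 0 < eps -> exists del, 0 < del /\
  forall t, b - del < t < b -> Cmod (h t - h b) < eps.
Definition ctsR (u : R -> R) c := forall eps, 0 < eps -> exists del, 0 < del /\
  forall t, Rabs (t - c) < del -> Rabs (u t - u c) < eps.

Lemma ctsR_of_continuous (u : R -> R) c : continuous u c -> ctsR u c.
Proof.
  intros H eps Heps. apply filterlim_locally with (eps := mkposreal eps Heps) in H.
  destruct H as [d Hd]. exists d. split. apply cond_pos.
  intros t Ht. apply (Hd t). exact Ht.
Qed.

Lemma ctsR_of_derive (u : R -> R) c l : is_derive u c l -> ctsR u c.
Proof.
  intros H. apply ctsR_of_continuous. apply (@ex_derive_continuous R_AbsRing R_NormedModule u c). exists l; exact H.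
Qed.

Lemma ctsC_of_comp (h : R -> C) c :
  ctsR (fun t => fst (h t)) c -> ctsR (fun t => snd (h t)) c -> ctsC h c.
Proof.
  intros H1 H2 eps Heps.
  destruct (H1 (eps/2)) as [d1 [d1p D1]]; [lra|].
  destruct (H2 (eps/2)) as [d2 [d2p D2]]; [lra|].
  exists (Rmin d1 d2). split. apply Rmin_pos; auto.
  intros t Ht. eapply Rle_lt_trans. apply Cmod_le_abs.
  specialize (D1 t). specialize (D2 t). simpl in D1, D2.
  assert (Rabs (t - c) < d1) by (eapply Rlt_le_trans; [apply Ht|apply Rmin_l]).
  assert (Rabs (t - c) < d2) by (eapply Rlt_le_trans; [apply Ht|apply Rmin_r]).
  simpl. specialize (D1 H). specialize (D2 H0). unfold Rminus in *. lra.
Qed.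

Lemma ctsC_of_derive (h : R -> C) c l : is_derive h c l -> ctsC h c.
Proof.
  intros H. apply ctsC_of_comp.
  eapply ctsR_of_derive. apply is_derive_C_fst; eauto.
  eapply ctsR_of_derive. apply is_derive_C_snd; eauto.
Qed.

Lemma continuous_of_ctsC (h : R -> C) c : ctsC h c -> continuous h c.
Proof.
  intros H. apply filterlim_locally. intros eps.
  destruct (H eps (cond_pos eps)) as [d [dp D]].
  exists (mkposreal d dp). intros y Hy. apply ballC_intro.
  - eapply Rle_lt_trans; [exact (abs_fst_le (h y - h c))|]. apply D. exact Hy.
  - eapply Rle_lt_trans; [exact (abs_snd_le (h y - h c))|]. apply D. exact Hy.
Qed.

Lemma rcont_of_cts h a : ctsC h a -> rcont h a.
Proof.
  intros H eps Heps. destruct (H eps Heps) as [d [dp D]]. exists d; split; auto.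
  intros t Ht. apply D. rewrite Rabs_right; lra.
Qed.

Lemma lcont_of_cts h b : ctsC h b -> lcont h b.
Proof.
  intros H eps Heps. destruct (H eps Heps) as [d [dp D]]. exists d; split; auto.
  intros t Ht. apply D. rewrite Rabs_left; lra.
Qed.

Lemma rcont_of_filterlim (h : R -> C) a :
  filterlim h (at_right a) (locally (h a)) -> rcont h a.
Proof.
  intros H eps Heps.
  assert (He : 0 < eps / 2) by lra.
  apply filterlim_locally with (eps := mkposreal _ He) in H.
  destruct H as [d Hd]. exists d. split. apply cond_pos.
  intros t Ht. assert (B : ball a d t).
  { change (Rabs (t - a) < d). rewrite Rabs_right; lra. }
  specialize (Hd t B ltac:(lra)). apply ballC_comp in Hd. simpl in Hd.
  eapply Rle_lt_trans. apply Cmod_le_abs. simpl. unfold Rminus in *. lra.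
Qed.

Lemma lcont_of_filterlim (h : R -> C) b :
  filterlim h (at_left b) (locally (h b)) -> lcont h b.
Proof.
  intros H eps Heps.
  assert (He : 0 < eps / 2) by lra.
  apply filterlim_locally with (eps := mkposreal _ He) in H.
  destruct H as [d Hd]. exists d. split. apply cond_pos.
  intros t Ht. assert (B : ball b d t).
  { change (Rabs (t - b) < d). rewrite Rabs_left; lra. }
  specialize (Hd t B ltac:(lra)). apply ballC_comp in Hd. simpl in Hd.
  eapply Rle_lt_trans. apply Cmod_le_abs. simpl. unfold Rminus in *. lra.
Qed.

Lemma filterlim_right_of_cts (h : R -> C) a :
  ctsC h a -> filterlim h (at_right a) (locally (h a)).
Proof.
  intros H. apply (@filterlim_filter_le_1 _ _ (locally a)).
  intros P HP. unfold at_right, within. destruct HP as [d Hd]. exists d. intros; auto.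
  apply continuous_of_ctsC; auto.
Qed.

Lemma filterlim_left_of_cts (h : R -> C) a :
  ctsC h a -> filterlim h (at_left a) (locally (h a)).
Proof.
  intros H. apply (@filterlim_filter_le_1 _ _ (locally a)).
  intros P HP. unfold at_left, within. destruct HP as [d Hd]. exists d. intros; auto.
  apply continuous_of_ctsC; auto.
Qed.

Lemma continuity_pt_of_ctsR (u : R -> R) c : ctsR u c -> continuity_pt u c.
Proof.
  intros H. unfold continuity_pt, continue_in, limit1_in, limit_in. intros eps Heps.
  destruct (H eps Heps) as [d [dp D]]. exists d. split; auto.
  intros x [_ Hx]. apply D. exact Hx.
Qed.


Definition rcR (u : R -> R) a := forall eps, 0 < eps -> exists del, 0 < del /\
  forall t, a < t < a + del -> Rabs (u t - u a) < eps.
Definition lcR (u : R -> R) b := forall eps, 0 < eps -> exists del, 0 < del /\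
  forall t, b - del < t < b -> Rabs (u t - u b) < eps.

Lemma rcR_of_cts u a : ctsR u a -> rcR u a.
Proof.
  intros H eps Heps. destruct (H eps Heps) as [d [dp D]]. exists d; split; auto.
  intros t Ht. apply D. rewrite Rabs_right; lra.
Qed.
Lemma lcR_of_cts u a : ctsR u a -> lcR u a.
Proof.
  intros H eps Heps. destruct (H eps Heps) as [d [dp D]]. exists d; split; auto.
  intros t Ht. apply D. rewrite Rabs_left; lra.
Qed.

Lemma mono_inner (k dk : R -> R) a b x y :
  (forall t, a < t < b -> is_derive k t (dk t)) -> (forall t, a < t < b -> dk t <= 0) ->
  a < x -> x < y -> y < b -> k y <= k x.
Proof.
  intros Hd Hneg Hax Hxy Hyb.
  destruct (MVT_gen k x y dk) as [c [Hc E]].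
  - intros t Ht. rewrite Rmin_left, Rmax_right in Ht by lra. apply Hd. lra.
  - intros t Ht. rewrite Rmin_left, Rmax_right in Ht by lra.
    apply continuity_pt_of_ctsR. eapply ctsR_of_derive. apply Hd. lra.
  - rewrite Rmin_left, Rmax_right in Hc by lra.
    assert (dk c <= 0) by (apply Hneg; lra).
    assert (dk c * (y - x) <= 0). { apply Rmult_le_0_r; lra. }
    lra.
Qed.

Lemma mono_dec (k dk : R -> R) a b :
  a < b -> (forall t, a < t < b -> is_derive k t (dk t)) -> (forall t, a < t < b -> dk t <= 0) ->
  rcR k a -> lcR k b -> k b <= k a.
Proof.
  intros Hab Hd Hneg Ha Hb.
  destruct (Rle_or_lt (k b) (k a)) as [H|H]; auto. exfalso.
  set (eps := (k b - k a) / 3).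
  assert (ep : 0 < eps) by (unfold eps; lra).
  destruct (Ha eps ep) as [d1 [d1p D1]]. destruct (Hb eps ep) as [d2 [d2p D2]].
  set (m1 := Rmin d1 ((b - a) / 2)). set (m2 := Rmin d2 ((b - a) / 2)).
  assert (m1p : 0 < m1) by (apply Rmin_pos; lra). assert (m2p : 0 < m2) by (apply Rmin_pos; lra).
  assert (m1l : m1 <= d1) by apply Rmin_l. assert (m1r : m1 <= (b - a) / 2) by apply Rmin_r.
  assert (m2l : m2 <= d2) by apply Rmin_l. assert (m2r : m2 <= (b - a) / 2) by apply Rmin_r.
  set (x := a + m1 / 2). set (y := b - m2 / 2).
  assert (E1 := D1 x ltac:(unfold x; lra)). assert (E2 := D2 y ltac:(unfold y; lra)).
  assert (k y <= k x) by (apply (mono_inner k dk a b); auto; unfold x, y; lra).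
  apply Rabs_def2 in E1. apply Rabs_def2 in E2. unfold eps in *. lra.
Qed.

Lemma is_derive_lin3 (f g p : R -> R) df dg dp al be ga t :
  is_derive f t df -> is_derive g t dg -> is_derive p t dp ->
  is_derive (fun t => al * f t + be * g t - ga * p t) t (al * df + be * dg - ga * dp).
Proof.
  intros Hf Hg Hp.
  pose proof (is_derive_scal f t al df Hf) as A.
  pose proof (is_derive_scal g t be dg Hg) as B.
  pose proof (is_derive_scal p t ga dp Hp) as P.
  pose proof (is_derive_plus _ _ _ _ _ A B) as AB.
  pose proof (is_derive_minus _ _ _ _ _ AB P) as ABP.
  eapply is_derive_eq. exact ABP. unfold minus, plus, opp, scal; simpl; unfold mult; simpl. ring.
Qed.

Lemma MVI (h D : R -> C) (phi dphi : R -> R) a b :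
  a < b -> (forall t, a < t < b -> is_derive h t (D t)) ->
  (forall t, is_derive phi t (dphi t)) ->
  (forall t, a < t < b -> Cmod (D t) <= dphi t) ->
  rcont h a -> lcont h b -> Cmod (h b - h a) <= phi b - phi a.
Proof.
  intros Hab Hd Hphi HD Ha Hb.
  assert (Phi_mono : phi a <= phi b).
  { assert (- phi b <= - phi a); [|lra].
    apply (mono_dec (fun t => - phi t) (fun t => - dphi t) a b Hab).
    - intros t Ht. apply (is_derive_opp phi). auto.
    - intros t Ht. pose proof (HD t Ht). pose proof (Cmod_ge_0 (D t)). lra.
    - apply rcR_of_cts. intros eps Heps. destruct (ctsR_of_derive phi a _ (Hphi a) eps Heps) as [d [dp Dd]].
      exists d; split; auto. intros t Ht. replace (- phi t - - phi a) with (- (phi t - phi a)) by ring.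
      rewrite Rabs_Ropp. auto.
    - apply lcR_of_cts. intros eps Heps. destruct (ctsR_of_derive phi b _ (Hphi b) eps Heps) as [d [dp Dd]].
      exists d; split; auto. intros t Ht. replace (- phi t - - phi b) with (- (phi t - phi b)) by ring.
      rewrite Rabs_Ropp. auto. }
  set (v := (h b - h a)%C).
  set (k := fun t => fst v * fst (h t) + snd v * snd (h t) - Cmod v * phi t).
  assert (Kd : forall t, a < t < b -> is_derive k t (fst v * fst (D t) + snd v * snd (D t) - Cmod v * dphi t)).
  { intros t Ht. unfold k.
    pose proof (is_derive_C_fst _ _ _ (Hd t Ht)) as H1. pose proof (is_derive_C_snd _ _ _ (Hd t Ht)) as H2.
    exact (is_derive_lin3 (fun t => fst (h t)) (fun t => snd (h t)) phi _ _ _ (fst v) (snd v) (Cmod v) t H1 H2 (Hphi t)). }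
  assert (Kneg : forall t, a < t < b -> fst v * fst (D t) + snd v * snd (D t) - Cmod v * dphi t <= 0).
  { intros t Ht.
    assert (fst v * fst (D t) + snd v * snd (D t) <= Cmod v * Cmod (D t)).
    { rewrite <- (Cmod_conj v), <- Cmod_mult.
      eapply Rle_trans; [|apply re_le_Cmod]. eapply Rle_trans; [|apply Rle_abs].
      unfold Re, Cconj; simpl. right; ring. }
    pose proof (HD t Ht). pose proof (Cmod_ge_0 v).
    assert (Cmod v * Cmod (D t) <= Cmod v * dphi t) by (apply Rmult_le_compat_l; auto).
    lra. }
  assert (Kab : k b <= k a).
  { apply (mono_dec k _ a b Hab Kd Kneg).
    - intros eps Heps.
      set (e' := eps / (3 * (Cmod v + 1))).
      assert (e'p : 0 < e'). { unfold e'. apply Rdiv_lt_0_compat; auto. pose proof (Cmod_ge_0 v); lra. }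
      destruct (Ha e' e'p) as [d1 [d1p D1]].
      destruct (ctsR_of_derive phi a _ (Hphi a) e' e'p) as [d2 [d2p D2]].
      exists (Rmin d1 d2). split. apply Rmin_pos; auto.
      intros t Ht. assert (Ht1 : a < t < a + d1) by (pose proof (Rmin_l d1 d2); lra).
      assert (Ht2 : Rabs (t - a) < d2) by (rewrite Rabs_right; pose proof (Rmin_r d1 d2); lra).
      specialize (D1 t Ht1). specialize (D2 t Ht2).
      unfold k.
      replace (fst v * fst (h t) + snd v * snd (h t) - Cmod v * phi t -
         (fst v * fst (h a) + snd v * snd (h a) - Cmod v * phi a))
       with (fst v * fst (h t - h a)%C + snd v * snd (h t - h a)%C - Cmod v * (phi t - phi a))
       by (simpl; ring).
      eapply Rle_lt_trans. apply Rabs_triang. rewrite Rabs_Ropp, Rabs_mult, (Rabs_right (Cmod v)) by (apply Rle_ge, Cmod_ge_0).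
      eapply Rle_lt_trans. apply Rplus_le_compat_r. apply Rabs_triang. rewrite !Rabs_mult.
      pose proof (abs_fst_le v). pose proof (abs_snd_le v).
      pose proof (abs_fst_le (h t - h a)). pose proof (abs_snd_le (h t - h a)).
      pose proof (Cmod_ge_0 v). pose proof (Cmod_ge_0 (h t - h a)).
      pose proof (Rabs_pos (fst v)). pose proof (Rabs_pos (snd v)).
      pose proof (Rabs_pos (fst (h t - h a)%C)). pose proof (Rabs_pos (snd (h t - h a)%C)).
      assert (Rabs (fst v) * Rabs (fst (h t - h a)%C) <= Cmod v * e') by (apply Rmult_le_compat; lra).
      assert (Rabs (snd v) * Rabs (snd (h t - h a)%C) <= Cmod v * e') by (apply Rmult_le_compat; lra).
      assert (Cmod v * Rabs (phi t - phi a) <= Cmod v * e') by (apply Rmult_le_compat_l; lra).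
      assert (3 * (Cmod v * e') < eps).
      { unfold e'. replace (3 * (Cmod v * (eps / (3 * (Cmod v + 1))))) with (eps * (Cmod v / (Cmod v + 1))) by (field; repeat split; intro; lra).
        assert (Cmod v / (Cmod v + 1) < 1). { unfold Rdiv. apply (Rmult_lt_reg_r (Cmod v + 1)); [lra|]. rewrite Rmult_assoc, Rinv_l by lra. lra. }
        nra. }
      lra.
    - intros eps Heps.
      set (e' := eps / (3 * (Cmod v + 1))).
      assert (e'p : 0 < e'). { unfold e'. apply Rdiv_lt_0_compat; auto. pose proof (Cmod_ge_0 v); lra. }
      destruct (Hb e' e'p) as [d1 [d1p D1]].
      destruct (ctsR_of_derive phi b _ (Hphi b) e' e'p) as [d2 [d2p D2]].
      exists (Rmin d1 d2). split. apply Rmin_pos; auto.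
      intros t Ht. assert (Ht1 : b - d1 < t < b) by (pose proof (Rmin_l d1 d2); lra).
      assert (Ht2 : Rabs (t - b) < d2) by (rewrite Rabs_left; pose proof (Rmin_r d1 d2); lra).
      specialize (D1 t Ht1). specialize (D2 t Ht2).
      unfold k.
      replace (fst v * fst (h t) + snd v * snd (h t) - Cmod v * phi t -
         (fst v * fst (h b) + snd v * snd (h b) - Cmod v * phi b))
       with (fst v * fst (h t - h b)%C + snd v * snd (h t - h b)%C - Cmod v * (phi t - phi b))
       by (simpl; ring).
      eapply Rle_lt_trans. apply Rabs_triang. rewrite Rabs_Ropp, Rabs_mult, (Rabs_right (Cmod v)) by (apply Rle_ge, Cmod_ge_0).
      eapply Rle_lt_trans. apply Rplus_le_compat_r. apply Rabs_triang. rewrite !Rabs_mult.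
      pose proof (abs_fst_le v). pose proof (abs_snd_le v).
      pose proof (abs_fst_le (h t - h b)). pose proof (abs_snd_le (h t - h b)).
      pose proof (Cmod_ge_0 v). pose proof (Cmod_ge_0 (h t - h b)).
      pose proof (Rabs_pos (fst v)). pose proof (Rabs_pos (snd v)).
      pose proof (Rabs_pos (fst (h t - h b)%C)). pose proof (Rabs_pos (snd (h t - h b)%C)).
      assert (Rabs (fst v) * Rabs (fst (h t - h b)%C) <= Cmod v * e') by (apply Rmult_le_compat; lra).
      assert (Rabs (snd v) * Rabs (snd (h t - h b)%C) <= Cmod v * e') by (apply Rmult_le_compat; lra).
      assert (Cmod v * Rabs (phi t - phi b) <= Cmod v * e') by (apply Rmult_le_compat_l; lra).
      assert (3 * (Cmod v * e') < eps).
      { unfold e'. replace (3 * (Cmod v * (eps / (3 * (Cmod v + 1))))) with (eps * (Cmod v / (Cmod v + 1))) by (field; repeat split; intro; lra).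
        assert (Cmod v / (Cmod v + 1) < 1). { unfold Rdiv. apply (Rmult_lt_reg_r (Cmod v + 1)); [lra|]. rewrite Rmult_assoc, Rinv_l by lra. lra. }
        nra. }
      lra. }
  unfold k in Kab.
  assert (Ev : fst v * fst (h b) + snd v * snd (h b) - (fst v * fst (h a) + snd v * snd (h a)) = Cmod v ^ 2).
  { rewrite Cmod2_alt. unfold v, Re, Im; simpl. ring. }
  pose proof (Cmod_ge_0 v).
  destruct (Req_dec (Cmod v) 0) as [Z|NZ].
  - rewrite Z. lra.
  - assert (Cmod v * Cmod v <= Cmod v * (phi b - phi a)) by nra.
    apply Rmult_le_reg_l with (Cmod v); lra.
Qed.


Definition RIntC (f : R -> C) (a b : R) : C := @RInt C_R_CompleteNormedModule f a b.

Lemma Cmod_mCi (x : C) : Cmod (- Ci * x)%C = Cmod x.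
Proof. rewrite Cmod_mult, Cmod_opp, Cmod_Ci. ring. Qed.

Lemma prim_derive (f : R -> C) (c : C) :
  (forall t, ctsC f t) -> forall t, is_derive (fun t => c + RIntC f 0 t)%C t (f t).
Proof.
  intros Hf t.
  assert (H : is_derive (fun b => RIntC f 0 b) t (f t)).
  { apply (@is_derive_RInt C_R_NormedModule f (fun b => RIntC f 0 b) 0 t).
    - exists (mkposreal 1 Rlt_0_1). intros b _. unfold RIntC.
      apply (@RInt_correct C_R_CompleteNormedModule).
      apply (@ex_RInt_continuous C_R_CompleteNormedModule). intros z _.
      apply continuous_of_ctsC; auto.
    - apply continuous_of_ctsC; auto. }
  eapply is_derive_eqC. apply is_derive_Cplus. apply is_derive_Cconst. exact H.
  apply injective_projections; simpl; ring.
Qed.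

Lemma prim_zero (f : R -> C) (c : C) : (c + RIntC f 0 0)%C = c.
Proof.
  unfold RIntC. rewrite RInt_point. apply injective_projections; simpl; unfold zero; simpl; ring.
Qed.

Lemma small_le x a c N : 0 <= c -> (forall n, (N <= n)%nat -> x <= a + c * (1/2) ^ n) -> x <= a.
Proof.
  intros c0 H. destruct (Rle_or_lt x a) as [|Hlt]; auto. exfalso.
  destruct (Req_dec c 0) as [Z|NZ].
  { specialize (H N (le_n N)). rewrite Z in H. lra. }
  assert (cp : 0 < c) by lra.
  destruct (pow_lt_1_zero (1/2) ltac:(rewrite Rabs_right; lra) ((x - a) / c)) as [M HM].
  { apply Rdiv_lt_0_compat; lra. }
  specialize (HM (max N M) ltac:(lia)). specialize (H (max N M) ltac:(lia)).
  rewrite Rabs_right in HM by (apply Rle_ge, pow_le; lra).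
  apply (Rmult_lt_compat_l c) in HM; auto.
  replace (c * ((x - a) / c)) with (x - a) in HM by (field; lra). lra.
Qed.

Lemma seq_lim (u : nat -> R) (N : nat) (c : R) : 0 <= c ->
  (forall n m, (N <= n)%nat -> (n <= m)%nat -> Rabs (u m - u n) <= c * (1/2) ^ n) ->
  forall n, (N <= n)%nat -> Rabs (real (Lim_seq u) - u n) <= c * (1/2) ^ n.
Proof.
  intros c0 H.
  assert (Ex : ex_finite_lim_seq u).
  { apply ex_lim_seq_cauchy_corr. intros eps.
    destruct (Req_dec c 0) as [Z|NZ].
    - exists N. intros n m Hn Hm.
      assert (Rabs (u n - u N) <= 0) by (rewrite <- (Rmult_0_l ((1/2)^N)), <- Z; auto).
      assert (Rabs (u m - u N) <= 0) by (rewrite <- (Rmult_0_l ((1/2)^N)), <- Z; auto).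
      replace (u n - u m) with ((u n - u N) - (u m - u N)) by ring.
      eapply Rle_lt_trans. apply Rabs_triang. rewrite Rabs_Ropp. pose proof (cond_pos eps). lra.
    - assert (cp : 0 < c) by lra.
      destruct (pow_lt_1_zero (1/2) ltac:(rewrite Rabs_right; lra) (eps / (2 * c))) as [M HM].
      { apply Rdiv_lt_0_compat. apply cond_pos. lra. }
      exists (max N M). intros n m Hn Hm. set (k := max N M).
      specialize (HM k ltac:(unfold k; lia)).
      rewrite Rabs_right in HM by (apply Rle_ge, pow_le; lra).
      assert (A1 : Rabs (u n - u k) <= c * (1/2)^k) by (apply H; unfold k in *; lia).
      assert (A2 : Rabs (u m - u k) <= c * (1/2)^k) by (apply H; unfold k in *; lia).
      apply (Rmult_lt_compat_l c) in HM; auto.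
      replace (c * (eps / (2 * c))) with (eps / 2) in HM by (field; lra).
      replace (u n - u m) with ((u n - u k) - (u m - u k)) by ring.
      eapply Rle_lt_trans. apply Rabs_triang. rewrite Rabs_Ropp. lra. }
  destruct Ex as [l Hl].
  assert (El : Lim_seq u = Finite l) by (apply is_lim_seq_unique; auto).
  rewrite El. simpl. intros n Hn.
  apply is_lim_seq_spec in Hl.
  assert (forall eps, 0 < eps -> Rabs (l - u n) <= c * (1/2)^n + eps).
  { intros eps Heps. destruct (Hl (mkposreal eps Heps)) as [M HM]. simpl in HM.
    specialize (HM (max M n) ltac:(lia)).
    specialize (H n (max M n) Hn ltac:(lia)).
    replace (l - u n) with ((u (max M n) - u n) - (u (max M n) - l)) by ring.
    eapply Rle_trans. apply Rabs_triang. rewrite Rabs_Ropp. lra. }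
  destruct (Rle_or_lt (Rabs (l - u n)) (c * (1/2)^n)) as [|Hlt]; auto.
  specialize (H0 ((Rabs (l - u n) - c * (1/2)^n)/2) ltac:(lra)). lra.
Qed.

Lemma F_cts (Q : qpoly) (y1 y2 : R -> C) t : ctsC y1 t -> ctsC y2 t ->
  ctsC (fun s => - Ci * dzb1 Q (y1 s) (y2 s))%C t /\ ctsC (fun s => - Ci * dzb2 Q (y1 s) (y2 s))%C t.
Proof.
  intros H1 H2.
  set (rho := cnorm2 (y1 t) (y2 t) + 1).
  assert (r0 : 0 <= rho). { unfold rho, cnorm2. pose proof (Cmod_ge_0 (y1 t)). pose proof (Rmax_l (Cmod (y1 t)) (Cmod (y2 t))). lra. }
  set (L := LipC Q rho).
  assert (L0 : 0 <= L) by (apply LipC_ge0; auto).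
  assert (key : forall eps, 0 < eps -> exists del, 0 < del /\ forall s, Rabs (s - t) < del ->
     Cmod (y1 s) <= rho /\ Cmod (y2 s) <= rho /\ L * cnorm2 (y1 s - y1 t) (y2 s - y2 t) < eps).
  { intros eps Heps. set (e' := Rmin 1 (eps / (L + 1))).
    assert (e'p : 0 < e') by (apply Rmin_pos; [lra|apply Rdiv_lt_0_compat; lra]).
    destruct (H1 e' e'p) as [d1 [d1p D1]]. destruct (H2 e' e'p) as [d2 [d2p D2]].
    exists (Rmin d1 d2). split. apply Rmin_pos; auto. intros s Hs.
    assert (S1 : Cmod (y1 s - y1 t) < e') by (apply D1; pose proof (Rmin_l d1 d2); lra).
    assert (S2 : Cmod (y2 s - y2 t) < e') by (apply D2; pose proof (Rmin_r d1 d2); lra).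
    assert (e'1 : e' <= 1) by apply Rmin_l. assert (e'2 : e' <= eps / (L + 1)) by apply Rmin_r.
    pose proof (cnorm2_l (y1 t) (y2 t)). pose proof (cnorm2_r (y1 t) (y2 t)).
    assert (T1 : Cmod (y1 s) <= Cmod (y1 t) + Cmod (y1 s - y1 t)).
    { replace (y1 s) with (y1 t + (y1 s - y1 t))%C at 1 by ring. apply Cmod_triangle. }
    assert (T2 : Cmod (y2 s) <= Cmod (y2 t) + Cmod (y2 s - y2 t)).
    { replace (y2 s) with (y2 t + (y2 s - y2 t))%C at 1 by ring. apply Cmod_triangle. }
    split; [unfold rho; lra|]. split; [unfold rho; lra|].
    assert (cnorm2 (y1 s - y1 t) (y2 s - y2 t) < e') by (unfold cnorm2; apply Rmax_lub_lt; auto).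
    assert (L * cnorm2 (y1 s - y1 t) (y2 s - y2 t) <= L * e') by (apply Rmult_le_compat_l; lra).
    assert (L * e' <= L * (eps / (L + 1))) by (apply Rmult_le_compat_l; lra).
    assert (L * (eps / (L + 1)) < eps).
    { replace (L * (eps / (L + 1))) with (eps * (L / (L + 1))) by (field; lra).
      assert (L / (L + 1) < 1). { unfold Rdiv. apply (Rmult_lt_reg_r (L + 1)); [lra|]. rewrite Rmult_assoc, Rinv_l by lra. lra. }
      nra. }
    lra. }
  assert (Yt1 : Cmod (y1 t) <= rho) by (unfold rho; pose proof (cnorm2_l (y1 t) (y2 t)); lra).
  assert (Yt2 : Cmod (y2 t) <= rho) by (unfold rho; pose proof (cnorm2_r (y1 t) (y2 t)); lra).
  split; intros eps Heps; destruct (key eps Heps) as [d [dp Dd]]; exists d; split; auto;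
    intros s Hs; destruct (Dd s Hs) as [B1 [B2 B3]].
  - replace (- Ci * dzb1 Q (y1 s) (y2 s) - - Ci * dzb1 Q (y1 t) (y2 t))%C
      with (- Ci * (dzb1 Q (y1 s) (y2 s) - dzb1 Q (y1 t) (y2 t)))%C by ring.
    rewrite Cmod_mCi. eapply Rle_lt_trans. apply (dzb1_lip Q _ _ _ _ rho); auto. exact B3.
  - replace (- Ci * dzb2 Q (y1 s) (y2 s) - - Ci * dzb2 Q (y1 t) (y2 t))%C
      with (- Ci * (dzb2 Q (y1 s) (y2 s) - dzb2 Q (y1 t) (y2 t)))%C by ring.
    rewrite Cmod_mCi. eapply Rle_lt_trans. apply (dzb2_lip Q _ _ _ _ rho); auto. exact B3.
Qed.


Definition F1 (Q : qpoly) (p : C * C) : C := (- Ci * dzb1 Q (fst p) (snd p))%C.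
Definition F2 (Q : qpoly) (p : C * C) : C := (- Ci * dzb2 Q (fst p) (snd p))%C.

Fixpoint pic (Q : qpoly) (z : C * C) (n : nat) : R -> C * C :=
  match n with
  | O => fun _ => z
  | Datatypes.S n => fun t =>
     ((fst z + RIntC (fun s => F1 Q (pic Q z n s)) 0 t)%C,
      (snd z + RIntC (fun s => F2 Q (pic Q z n s)) 0 t)%C)
  end.

Lemma ctsC_const (c : C) t : ctsC (fun _ => c) t.
Proof.
  intros eps Heps. exists 1. split; [lra|]. intros s _.
  replace (c - c)%C with (RtoC 0) by ring. rewrite Cmod_0. auto.
Qed.

Lemma Fpic_cts Q (y : R -> C * C) u :
  (forall t, ctsC (fun s => fst (y s)) t /\ ctsC (fun s => snd (y s)) t) ->
  ctsC (fun s => F1 Q (y s)) u /\ ctsC (fun s => F2 Q (y s)) u.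
Proof.
  intros IH. destruct (IH u) as [A B].
  exact (F_cts Q (fun s => fst (y s)) (fun s => snd (y s)) u A B).
Qed.

Lemma pic_cts Q z n : forall t,
  ctsC (fun s => fst (pic Q z n s)) t /\ ctsC (fun s => snd (pic Q z n s)) t.
Proof.
  induction n as [|n IH]; intros t.
  - simpl. split; apply (ctsC_const (fst z)) || apply (ctsC_const (snd z)).
  - assert (C1 : forall t, ctsC (fun s => F1 Q (pic Q z n s)) t) by (intros u; apply (Fpic_cts Q (pic Q z n) u IH)).
    assert (C2 : forall t, ctsC (fun s => F2 Q (pic Q z n s)) t) by (intros u; apply (Fpic_cts Q (pic Q z n) u IH)).
    split.
    + apply (ctsC_of_derive _ t (F1 Q (pic Q z n t))). 
      exact (prim_derive (fun s => F1 Q (pic Q z n s)) (fst z) C1 t).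
    + apply (ctsC_of_derive _ t (F2 Q (pic Q z n t))).
      exact (prim_derive (fun s => F2 Q (pic Q z n s)) (snd z) C2 t).
Qed.

Lemma pic_deriv Q z n t :
  is_derive (fun s => fst (pic Q z (S n) s)) t (F1 Q (pic Q z n t)) /\
  is_derive (fun s => snd (pic Q z (S n) s)) t (F2 Q (pic Q z n t)).
Proof.
  assert (C1 : forall t, ctsC (fun s => F1 Q (pic Q z n s)) t)
    by (intros u; apply (Fpic_cts Q (pic Q z n) u (pic_cts Q z n))).
  assert (C2 : forall t, ctsC (fun s => F2 Q (pic Q z n s)) t)
    by (intros u; apply (Fpic_cts Q (pic Q z n) u (pic_cts Q z n))).
  split; simpl; apply prim_derive; auto.
Qed.

Lemma pic_zero Q z n : fst (pic Q z n 0) = fst z /\ snd (pic Q z n 0) = snd z.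
Proof. destruct n; simpl; auto. split; apply prim_zero. Qed.

Definition ODEhyp (Q : qpoly) (z : C * C) (r K : R) : Prop :=
  0 <= K /\ 0 <= r /\ cnorm2 (fst z) (snd z) + K <= r /\
  (forall w1 w2, cnorm2 w1 w2 <= r -> Cmod (dzb1 Q w1 w2) <= K /\ Cmod (dzb2 Q w1 w2) <= K).

Lemma is_derive_lin (K t : R) : is_derive (fun s => K * s) t K.
Proof. auto_derive; auto. ring. Qed.

Lemma rcont_of_deriv (h : R -> C) a : (forall t, exists l, is_derive h t l) -> rcont h a.
Proof. intros H. destruct (H a) as [l Hl]. apply rcont_of_cts. eapply ctsC_of_derive; eauto. Qed.
Lemma lcont_of_deriv (h : R -> C) a : (forall t, exists l, is_derive h t l) -> lcont h a.
Proof. intros H. destruct (H a) as [l Hl]. apply lcont_of_cts. eapply ctsC_of_derive; eauto. Qed.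

Lemma ball_of_dist (p z : C * C) K r t :
  cnorm2 (fst z) (snd z) + K <= r -> 0 <= K -> 0 <= t <= 1 ->
  Cmod (fst p - fst z) <= K * t -> Cmod (snd p - snd z) <= K * t ->
  cnorm2 (fst p) (snd p) <= r.
Proof.
  intros Hz K0 Ht H1 H2.
  assert (K * t <= K) by (replace K with (K * 1) at 2 by ring; apply Rmult_le_compat_l; lra).
  pose proof (cnorm2_l (fst z) (snd z)). pose proof (cnorm2_r (fst z) (snd z)).
  apply cnorm2_le.
  - replace (fst p) with (fst z + (fst p - fst z))%C by ring.
    eapply Rle_trans. apply Cmod_triangle. lra.
  - replace (snd p) with (snd z + (snd p - snd z))%C by ring.
    eapply Rle_trans. apply Cmod_triangle. lra.
Qed.

Lemma pic_ball Q z r K n : ODEhyp Q z r K -> forall t, 0 <= t <= 1 ->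
  Cmod (fst (pic Q z n t) - fst z) <= K * t /\ Cmod (snd (pic Q z n t) - snd z) <= K * t.
Proof.
  intros [K0 [r0 [Hz HK]]]. induction n as [|n IH]; intros t Ht.
  - simpl. replace (fst z - fst z)%C with (RtoC 0) by ring.
    replace (snd z - snd z)%C with (RtoC 0) by ring. rewrite Cmod_0.
    split; apply Rmult_le_pos; lra.
  - destruct (Req_dec t 0) as [->|Tn0].
    + destruct (pic_zero Q z (S n)) as [E1 E2]. rewrite E1, E2.
      replace (fst z - fst z)%C with (RtoC 0) by ring.
      replace (snd z - snd z)%C with (RtoC 0) by ring. rewrite Cmod_0. lra.
    + assert (Bs : forall s, 0 < s < t -> Cmod (F1 Q (pic Q z n s)) <= K /\ Cmod (F2 Q (pic Q z n s)) <= K).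
      { intros s Hs. destruct (IH s ltac:(lra)) as [I1 I2].
        assert (Hs01 : 0 <= s <= 1) by lra. pose proof (ball_of_dist _ _ _ _ s Hz K0 Hs01 I1 I2) as Hb.
        unfold F1, F2. rewrite !Cmod_mCi. apply HK; auto. }
      destruct (pic_zero Q z (S n)) as [E1 E2].
      assert (tpos : 0 < t) by lra.
      split.
      * rewrite <- E1.
        replace (K * t) with (K * t - K * 0) by ring.
        pose proof (MVI (fun s => fst (pic Q z (S n) s)) (fun s => F1 Q (pic Q z n s)) (fun s => K * s) (fun _ => K) 0 t) as M.
        cbv beta in M. apply M; clear M.
        lra. intros s _. apply (proj1 (pic_deriv Q z n s)). intros; apply is_derive_lin.
        intros s Hs; apply (proj1 (Bs s Hs)).
        apply rcont_of_deriv. intros u; eexists; apply (proj1 (pic_deriv Q z n u)).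
        apply lcont_of_deriv. intros u; eexists; apply (proj1 (pic_deriv Q z n u)).
      * rewrite <- E2.
        replace (K * t) with (K * t - K * 0) by ring.
        pose proof (MVI (fun s => snd (pic Q z (S n) s)) (fun s => F2 Q (pic Q z n s)) (fun s => K * s) (fun _ => K) 0 t) as M.
        cbv beta in M. apply M; clear M.
        lra. intros s _. apply (proj2 (pic_deriv Q z n s)). intros; apply is_derive_lin.
        intros s Hs; apply (proj2 (Bs s Hs)).
        apply rcont_of_deriv. intros u; eexists; apply (proj2 (pic_deriv Q z n u)).
        apply lcont_of_deriv. intros u; eexists; apply (proj2 (pic_deriv Q z n u)).
Qed.

Lemma pic_inball Q z r K n t : ODEhyp Q z r K -> 0 <= t <= 1 ->
  cnorm2 (fst (pic Q z n t)) (snd (pic Q z n t)) <= r.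
Proof.
  intros H Ht. destruct (pic_ball Q z r K n H t Ht) as [I1 I2].
  destruct H as [K0 [r0 [Hz HK]]]. eapply ball_of_dist; eauto.
Qed.

Lemma is_derive_powfact (c : R) m t :
  is_derive (fun s => c * s ^ (S m) / INR (fact (S m))) t (c * t ^ m / INR (fact m)).
Proof.
  pose proof (INR_fact_neq_0 m). pose proof (INR_fact_neq_0 (S m)).
  auto_derive; auto.
  change (match m with 0%nat => 1 | S _ => INR m + 1 end) with (INR (S m)).
  change (fact m + m * fact m)%nat with (fact (S m)).
  rewrite fact_simpl, mult_INR.
  field. split; auto. apply not_0_INR. lia.
Qed.

Lemma F1_lip Q r p q : 0 <= r -> cnorm2 (fst p) (snd p) <= r -> cnorm2 (fst q) (snd q) <= r ->
  Cmod (F1 Q p - F1 Q q) <= LipC Q r * cnorm2 (fst p - fst q) (snd p - snd q).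
Proof.
  intros r0 Hp Hq. unfold F1.
  replace (- Ci * dzb1 Q (fst p) (snd p) - - Ci * dzb1 Q (fst q) (snd q))%C
    with (- Ci * (dzb1 Q (fst p) (snd p) - dzb1 Q (fst q) (snd q)))%C by ring.
  rewrite Cmod_mCi. apply dzb1_lip; auto;
  first [ eapply Rle_trans; [apply cnorm2_l|eauto]; fail | eapply Rle_trans; [apply cnorm2_r|eauto] ].
Qed.

Lemma F2_lip Q r p q : 0 <= r -> cnorm2 (fst p) (snd p) <= r -> cnorm2 (fst q) (snd q) <= r ->
  Cmod (F2 Q p - F2 Q q) <= LipC Q r * cnorm2 (fst p - fst q) (snd p - snd q).
Proof.
  intros r0 Hp Hq. unfold F2.
  replace (- Ci * dzb2 Q (fst p) (snd p) - - Ci * dzb2 Q (fst q) (snd q))%C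
    with (- Ci * (dzb2 Q (fst p) (snd p) - dzb2 Q (fst q) (snd q)))%C by ring.
  rewrite Cmod_mCi. apply dzb2_lip; auto;
  first [ eapply Rle_trans; [apply cnorm2_l|eauto]; fail | eapply Rle_trans; [apply cnorm2_r|eauto] ].
Qed.

Lemma pic_diff Q z r K n : ODEhyp Q z r K -> forall t, 0 <= t <= 1 ->
  Cmod (fst (pic Q z (S n) t) - fst (pic Q z n t)) <= K * LipC Q r ^ n * t ^ (S n) / INR (fact (S n)) /\
  Cmod (snd (pic Q z (S n) t) - snd (pic Q z n t)) <= K * LipC Q r ^ n * t ^ (S n) / INR (fact (S n)).
Proof.
  intros Hyp. pose proof Hyp as [K0 [r0 [Hz HK]]].
  set (L := LipC Q r). assert (L0 : 0 <= L) by (apply LipC_ge0; auto).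
  induction n as [|n IH]; intros t Ht.
  - destruct (pic_ball Q z r K 1 Hyp t Ht) as [A B]. simpl pic at 2.
    replace (K * L ^ 0 * t ^ 1 / INR (fact 1)) with (K * t) by (simpl; field). split; auto.
  - destruct (Req_dec t 0) as [->|Tn0].
    + destruct (pic_zero Q z (S (S n))) as [E1 E2]. destruct (pic_zero Q z (S n)) as [E3 E4].
      rewrite E1, E2, E3, E4.
      replace (fst z - fst z)%C with (RtoC 0) by ring.
      replace (snd z - snd z)%C with (RtoC 0) by ring. rewrite Cmod_0.
      replace (0 ^ S (S n)) with 0 by (simpl; ring). unfold Rdiv. rewrite !Rmult_0_r, Rmult_0_l. lra.
    + assert (tpos : 0 < t) by lra.
      destruct (pic_zero Q z (S (S n))) as [E1 E2]. destruct (pic_zero Q z (S n)) as [E3 E4].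
      set (c := K * L ^ S n).
      assert (Hphi : forall s, is_derive (fun s => c * s ^ S (S n) / INR (fact (S (S n)))) s
                                         (c * s ^ S n / INR (fact (S n)))) by (intros; apply is_derive_powfact).
      assert (Bd : forall s, 0 < s < t ->
         cnorm2 (fst (pic Q z (S n) s) - fst (pic Q z n s)) (snd (pic Q z (S n) s) - snd (pic Q z n s))
           <= K * L ^ n * s ^ S n / INR (fact (S n))).
      { intros s Hs. destruct (IH s ltac:(lra)) as [I1 I2]. apply cnorm2_le; auto. }
      assert (Bf : forall s, 0 < s < t ->
         Cmod (F1 Q (pic Q z (S n) s) - F1 Q (pic Q z n s)) <= c * s ^ S n / INR (fact (S n)) /\
         Cmod (F2 Q (pic Q z (S n) s) - F2 Q (pic Q z n s)) <= c * s ^ S n / INR (fact (S n))).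
      { intros s Hs.
        assert (s01 : 0 <= s <= 1) by lra.
        pose proof (pic_inball Q z r K (S n) s Hyp s01). pose proof (pic_inball Q z r K n s Hyp s01).
        replace (c * s ^ S n / INR (fact (S n))) with (L * (K * L ^ n * s ^ S n / INR (fact (S n))))
          by (unfold c; change (L ^ S n) with (L * L ^ n); field; apply INR_fact_neq_0).
        split.
        - eapply Rle_trans; [apply (F1_lip Q r); auto|].
          apply Rmult_le_compat_l; auto; apply Bd; auto.
        - eapply Rle_trans; [apply (F2_lip Q r); auto|].
          apply Rmult_le_compat_l; auto; apply Bd; auto. }
      assert (Dv : forall s,
        is_derive (fun s => fst (pic Q z (S (S n)) s) - fst (pic Q z (S n) s))%C s
                  (F1 Q (pic Q z (S n) s) - F1 Q (pic Q z n s))%C /\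
        is_derive (fun s => snd (pic Q z (S (S n)) s) - snd (pic Q z (S n) s))%C s
                  (F2 Q (pic Q z (S n) s) - F2 Q (pic Q z n s))%C).
      { intros s. destruct (pic_deriv Q z (S n) s) as [A1 A2]. destruct (pic_deriv Q z n s) as [B1 B2].
        split; apply is_derive_Cminus; auto. }
      split.
      * replace (fst (pic Q z (S (S n)) t) - fst (pic Q z (S n) t))%C with
          ((fst (pic Q z (S (S n)) t) - fst (pic Q z (S n) t)) - (fst (pic Q z (S (S n)) 0) - fst (pic Q z (S n) 0)))%C
          by (rewrite E1, E3; ring).
        replace (c * t ^ S (S n) / INR (fact (S (S n)))) with
          (c * t ^ S (S n) / INR (fact (S (S n))) - c * 0 ^ S (S n) / INR (fact (S (S n))))
          by (unfold c; change (0 ^ S (S n)) with (0 * 0 ^ (S n)); field; apply INR_fact_neq_0).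
        pose proof (MVI (fun s => fst (pic Q z (S (S n)) s) - fst (pic Q z (S n) s))%C
                        (fun s => F1 Q (pic Q z (S n) s) - F1 Q (pic Q z n s))%C
                        (fun s => c * s ^ S (S n) / INR (fact (S (S n))))
                        (fun s => c * s ^ S n / INR (fact (S n))) 0 t) as M.
        cbv beta in M. apply M; clear M; auto.
        intros s _. apply (proj1 (Dv s)).
        intros s Hs. apply (proj1 (Bf s Hs)).
        apply rcont_of_deriv. intros u; eexists; apply (proj1 (Dv u)).
        apply lcont_of_deriv. intros u; eexists; apply (proj1 (Dv u)).
      * replace (snd (pic Q z (S (S n)) t) - snd (pic Q z (S n) t))%C with
          ((snd (pic Q z (S (S n)) t) - snd (pic Q z (S n) t)) - (snd (pic Q z (S (S n)) 0) - snd (pic Q z (S n) 0)))%C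
          by (rewrite E2, E4; ring).
        replace (c * t ^ S (S n) / INR (fact (S (S n)))) with
          (c * t ^ S (S n) / INR (fact (S (S n))) - c * 0 ^ S (S n) / INR (fact (S (S n))))
          by (unfold c; change (0 ^ S (S n)) with (0 * 0 ^ (S n)); field; apply INR_fact_neq_0).
        pose proof (MVI (fun s => snd (pic Q z (S (S n)) s) - snd (pic Q z (S n) s))%C
                        (fun s => F2 Q (pic Q z (S n) s) - F2 Q (pic Q z n s))%C
                        (fun s => c * s ^ S (S n) / INR (fact (S (S n))))
                        (fun s => c * s ^ S n / INR (fact (S n))) 0 t) as M.
        cbv beta in M. apply M; clear M; auto.
        intros s _. apply (proj2 (Dv s)).
        intros s Hs. apply (proj2 (Bf s Hs)).
        apply rcont_of_deriv. intros u; eexists; apply (proj2 (Dv u)).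
        apply lcont_of_deriv. intros u; eexists; apply (proj2 (Dv u)).
Qed.


Lemma fact_geo L : 0 <= L -> exists N, forall n, (N <= n)%nat -> L ^ n / INR (fact n) <= (1/2) ^ n.
Proof.
  intros L0. destruct (cv_speed_pow_fact (2 * L) 1 Rlt_0_1) as [N HN].
  exists N. intros n Hn. specialize (HN n Hn). unfold R_dist in HN.
  rewrite Rminus_0_r, Rabs_right in HN.
  2:{ apply Rle_ge. apply Rmult_le_pos. apply pow_le; lra. left; apply Rinv_0_lt_compat, INR_fact_lt_0. }
  rewrite Rpow_mult_distr in HN.
  assert (P2 : 0 < 2 ^ n) by (apply pow_lt; lra).
  assert (E : (1/2) ^ n * 2 ^ n = 1) by (rewrite <- Rpow_mult_distr; replace (1/2*2) with 1 by field; apply pow1).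
  assert (L ^ n / INR (fact n) * 2 ^ n < 1) by (unfold Rdiv in *; nra).
  assert (0 < (1/2)^n) by (apply pow_lt; lra).
  apply Rmult_le_reg_r with (2 ^ n); auto. rewrite E. lra.
Qed.

Lemma geo_cauchy (u : nat -> C) N c :
  (forall n, (N <= n)%nat -> Cmod (u (S n) - u n) <= c * (1/2) ^ n) ->
  forall n m, (N <= n)%nat -> (n <= m)%nat -> Cmod (u m - u n) <= 2 * c * (1/2) ^ n - 2 * c * (1/2) ^ m.
Proof.
  intros H n m Hn Hm. induction Hm as [|m Hm IH].
  - replace (u n - u n)%C with (RtoC 0) by ring. rewrite Cmod_0. lra.
  - replace (u (S m) - u n)%C with ((u (S m) - u m) + (u m - u n))%C by ring.
    eapply Rle_trans. apply Cmod_triangle.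
    specialize (H m ltac:(lia)). simpl pow. lra.
Qed.

Definition climit (u : nat -> C) : C :=
  (real (Lim_seq (fun n => fst (u n))), real (Lim_seq (fun n => snd (u n)))).

Lemma climit_approx (u : nat -> C) N c : 0 <= c ->
  (forall n, (N <= n)%nat -> Cmod (u (S n) - u n) <= c * (1/2) ^ n) ->
  forall n, (N <= n)%nat -> Cmod (climit u - u n) <= 4 * c * (1/2) ^ n.
Proof.
  intros c0 H n Hn.
  assert (G : forall n m, (N <= n)%nat -> (n <= m)%nat -> Cmod (u m - u n) <= (2 * c) * (1/2) ^ n).
  { intros a b Ha Hb. eapply Rle_trans. apply (geo_cauchy u N c H); auto.
    assert (0 <= (1/2)^b) by (apply pow_le; lra). nra. }
  assert (A1 := seq_lim (fun n => fst (u n)) N (2 * c) ltac:(lra)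
    ltac:(intros a b Ha Hb; eapply Rle_trans; [exact (abs_fst_le (u b - u a))|]; apply G; auto) n Hn).
  assert (A2 := seq_lim (fun n => snd (u n)) N (2 * c) ltac:(lra)
    ltac:(intros a b Ha Hb; eapply Rle_trans; [exact (abs_snd_le (u b - u a))|]; apply G; auto) n Hn).
  eapply Rle_trans. apply Cmod_le_abs. unfold climit. simpl. unfold Rminus in *. lra.
Qed.

Lemma pic_geo Q z r K : ODEhyp Q z r K -> exists N, forall n, (N <= n)%nat -> forall t, 0 <= t <= 1 ->
  Cmod (fst (pic Q z (S n) t) - fst (pic Q z n t)) <= K * (1/2) ^ n /\
  Cmod (snd (pic Q z (S n) t) - snd (pic Q z n t)) <= K * (1/2) ^ n.
Proof.
  intros Hyp. pose proof Hyp as [K0 [r0 [Hz HK]]].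
  set (L := LipC Q r). assert (L0 : 0 <= L) by (apply LipC_ge0; auto).
  destruct (fact_geo L L0) as [N HN]. exists N. intros n Hn t Ht.
  assert (Bd : K * L ^ n * t ^ S n / INR (fact (S n)) <= K * (1/2) ^ n).
  { assert (f1 : 0 < INR (fact n)) by apply INR_fact_lt_0.
    assert (f12 : INR (fact n) <= INR (fact (S n))) by (apply le_INR; rewrite fact_simpl; nia).
    assert (p1 : t ^ S n <= 1) by (rewrite <- (pow1 (S n)); apply pow_incr; lra).
    assert (p0 : 0 <= t ^ S n) by (apply pow_le; lra).
    assert (a0 : 0 <= L ^ n) by (apply pow_le; lra).
    specialize (HN n Hn).
    assert (I1 : / INR (fact (S n)) <= / INR (fact n)) by (apply Rinv_le_contravar; auto).
    assert (I2 : t ^ S n * / INR (fact (S n)) <= / INR (fact n)).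
    { assert (0 <= / INR (fact (S n))) by (left; apply Rinv_0_lt_compat; lra). nra. }
    unfold Rdiv in *. replace (K * L ^ n * t ^ S n * / INR (fact (S n))) with (K * (L ^ n * (t ^ S n * / INR (fact (S n))))) by ring.
    apply Rmult_le_compat_l; auto.
    eapply Rle_trans; [|apply HN]. apply Rmult_le_compat_l; auto. }
  destruct (pic_diff Q z r K n Hyp t Ht) as [A B]. fold L in A, B. split; lra.
Qed.

Definition clamp (t : R) : R := Rmax 0 (Rmin 1 t).
Lemma clamp_01 t : 0 <= clamp t <= 1.
Proof. unfold clamp, Rmax, Rmin. repeat destruct Rle_dec; lra. Qed.
Lemma clamp_id t : 0 <= t <= 1 -> clamp t = t.
Proof. intros. unfold clamp, Rmax, Rmin. repeat destruct Rle_dec; lra. Qed.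
Lemma clamp_lip t s : Rabs (clamp t - clamp s) <= Rabs (t - s).
Proof.
  unfold clamp, Rmax, Rmin. unfold Rabs. repeat destruct Rle_dec; repeat destruct Rcase_abs; lra.
Qed.

Definition y1 Q z t : C := climit (fun n => fst (pic Q z n (clamp t))).
Definition y2 Q z t : C := climit (fun n => snd (pic Q z n (clamp t))).

Lemma y_approx Q z r K : ODEhyp Q z r K -> exists N, forall n, (N <= n)%nat -> forall t,
  Cmod (y1 Q z t - fst (pic Q z n (clamp t))) <= 4 * K * (1/2) ^ n /\
  Cmod (y2 Q z t - snd (pic Q z n (clamp t))) <= 4 * K * (1/2) ^ n.
Proof.
  intros Hyp. pose proof Hyp as [K0 _].
  destruct (pic_geo Q z r K Hyp) as [N HN]. exists N. intros n Hn t. split.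
  - apply (climit_approx (fun n => fst (pic Q z n (clamp t))) N K K0); auto.
    intros m Hm. apply (HN m Hm (clamp t) (clamp_01 t)).
  - apply (climit_approx (fun n => snd (pic Q z n (clamp t))) N K K0); auto.
    intros m Hm. apply (HN m Hm (clamp t) (clamp_01 t)).
Qed.

Lemma y_ball Q z r K : ODEhyp Q z r K -> forall t,
  Cmod (y1 Q z t - fst z) <= K * clamp t /\ Cmod (y2 Q z t - snd z) <= K * clamp t.
Proof.
  intros Hyp t. pose proof Hyp as [K0 _].
  destruct (y_approx Q z r K Hyp) as [N HN].
  split; apply (small_le _ _ (4 * K) N ltac:(lra)); intros n Hn;
    destruct (HN n Hn t) as [A1 A2]; destruct (pic_ball Q z r K n Hyp (clamp t) (clamp_01 t)) as [B1 B2].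
  - replace (y1 Q z t - fst z)%C with ((y1 Q z t - fst (pic Q z n (clamp t))) + (fst (pic Q z n (clamp t)) - fst z))%C by ring.
    eapply Rle_trans. apply Cmod_triangle. lra.
  - replace (y2 Q z t - snd z)%C with ((y2 Q z t - snd (pic Q z n (clamp t))) + (snd (pic Q z n (clamp t)) - snd z))%C by ring.
    eapply Rle_trans. apply Cmod_triangle. lra.
Qed.

Lemma pic_lip Q z r K n : ODEhyp Q z r K -> forall s t, 0 <= s -> s <= t -> t <= 1 ->
  Cmod (fst (pic Q z n t) - fst (pic Q z n s)) <= K * t - K * s /\
  Cmod (snd (pic Q z n t) - snd (pic Q z n s)) <= K * t - K * s.
Proof.
  intros Hyp s t Hs Hst Ht. pose proof Hyp as [K0 [r0 [Hz HK]]].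
  destruct n as [|n].
  - simpl. replace (fst z - fst z)%C with (RtoC 0) by ring.
    replace (snd z - snd z)%C with (RtoC 0) by ring. rewrite Cmod_0.
    assert (K * s <= K * t) by (apply Rmult_le_compat_l; lra). lra.
  - destruct (Req_dec s t) as [<-|Nst].
    + replace (fst (pic Q z (S n) s) - fst (pic Q z (S n) s))%C with (RtoC 0) by ring.
      replace (snd (pic Q z (S n) s) - snd (pic Q z (S n) s))%C with (RtoC 0) by ring.
      rewrite Cmod_0. lra.
    + assert (Bs : forall u, s < u < t -> Cmod (F1 Q (pic Q z n u)) <= K /\ Cmod (F2 Q (pic Q z n u)) <= K).
      { intros u Hu. assert (u01 : 0 <= u <= 1) by lra.
        pose proof (pic_inball Q z r K n u Hyp u01) as Hb.
        unfold F1, F2. rewrite !Cmod_mCi. apply HK; auto. }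
      assert (slt : s < t) by lra.
      split.
      * pose proof (MVI (fun s => fst (pic Q z (S n) s)) (fun s => F1 Q (pic Q z n s)) (fun s => K * s) (fun _ => K) s t) as M.
        cbv beta in M. apply M; clear M; auto.
        intros u _. apply (proj1 (pic_deriv Q z n u)). intros; apply is_derive_lin.
        intros u Hu; apply (proj1 (Bs u Hu)).
        apply rcont_of_deriv. intros u; eexists; apply (proj1 (pic_deriv Q z n u)).
        apply lcont_of_deriv. intros u; eexists; apply (proj1 (pic_deriv Q z n u)).
      * pose proof (MVI (fun s => snd (pic Q z (S n) s)) (fun s => F2 Q (pic Q z n s)) (fun s => K * s) (fun _ => K) s t) as M.
        cbv beta in M. apply M; clear M; auto.
        intros u _. apply (proj2 (pic_deriv Q z n u)). intros; apply is_derive_lin.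
        intros u Hu; apply (proj2 (Bs u Hu)).
        apply rcont_of_deriv. intros u; eexists; apply (proj2 (pic_deriv Q z n u)).
        apply lcont_of_deriv. intros u; eexists; apply (proj2 (pic_deriv Q z n u)).
Qed.

Lemma pic_lip_abs Q z r K n : ODEhyp Q z r K -> forall s t,
  Cmod (fst (pic Q z n (clamp t)) - fst (pic Q z n (clamp s))) <= K * Rabs (t - s) /\
  Cmod (snd (pic Q z n (clamp t)) - snd (pic Q z n (clamp s))) <= K * Rabs (t - s).
Proof.
  intros Hyp s t. pose proof Hyp as [K0 _].
  pose proof (clamp_01 t). pose proof (clamp_01 s). pose proof (clamp_lip t s).
  assert (KK : K * Rabs (clamp t - clamp s) <= K * Rabs (t - s)) by (apply Rmult_le_compat_l; auto).
  destruct (Rle_or_lt (clamp s) (clamp t)) as [Le|Lt].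
  - destruct (pic_lip Q z r K n Hyp (clamp s) (clamp t)) as [A B]; try lra.
    rewrite Rabs_right in KK by lra. split; lra.
  - destruct (pic_lip Q z r K n Hyp (clamp t) (clamp s)) as [A B]; try lra.
    rewrite Rabs_left in KK by lra.
    rewrite <- Cmod_opp in A, B.
    replace (- (fst (pic Q z n (clamp s)) - fst (pic Q z n (clamp t))))%C
      with (fst (pic Q z n (clamp t)) - fst (pic Q z n (clamp s)))%C in A by ring.
    replace (- (snd (pic Q z n (clamp s)) - snd (pic Q z n (clamp t))))%C
      with (snd (pic Q z n (clamp t)) - snd (pic Q z n (clamp s)))%C in B by ring.
    split; lra.
Qed.

Lemma y_lip Q z r K : ODEhyp Q z r K -> forall s t,
  Cmod (y1 Q z t - y1 Q z s) <= K * Rabs (t - s) /\ Cmod (y2 Q z t - y2 Q z s) <= K * Rabs (t - s).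
Proof.
  intros Hyp s t. pose proof Hyp as [K0 _].
  destruct (y_approx Q z r K Hyp) as [N HN].
  split; apply (small_le _ _ (8 * K) N ltac:(lra)); intros n Hn;
    destruct (HN n Hn t) as [A1 A2]; destruct (HN n Hn s) as [B1 B2];
    destruct (pic_lip_abs Q z r K n Hyp s t) as [C1 C2].
  - replace (y1 Q z t - y1 Q z s)%C with ((y1 Q z t - fst (pic Q z n (clamp t)))
       + (fst (pic Q z n (clamp t)) - fst (pic Q z n (clamp s))) - (y1 Q z s - fst (pic Q z n (clamp s))))%C by ring.
    eapply Rle_trans. apply Cmod_triangle. rewrite Cmod_opp.
    eapply Rle_trans. apply Rplus_le_compat_r. apply Cmod_triangle. lra.
  - replace (y2 Q z t - y2 Q z s)%C with ((y2 Q z t - snd (pic Q z n (clamp t)))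
       + (snd (pic Q z n (clamp t)) - snd (pic Q z n (clamp s))) - (y2 Q z s - snd (pic Q z n (clamp s))))%C by ring.
    eapply Rle_trans. apply Cmod_triangle. rewrite Cmod_opp.
    eapply Rle_trans. apply Rplus_le_compat_r. apply Cmod_triangle. lra.
Qed.

Lemma ctsC_of_lip (h : R -> C) K t : 0 <= K -> (forall s, Cmod (h s - h t) <= K * Rabs (s - t)) -> ctsC h t.
Proof.
  intros K0 H eps Heps. exists (eps / (K + 1)). split. apply Rdiv_lt_0_compat; lra.
  intros s Hs. eapply Rle_lt_trans. apply H.
  assert (K * Rabs (s - t) <= K * (eps / (K + 1))) by (apply Rmult_le_compat_l; lra).
  assert (K * (eps / (K + 1)) < eps).
  { replace (K * (eps / (K + 1))) with (eps * (K / (K + 1))) by (field; lra).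
    assert (K / (K + 1) < 1). { unfold Rdiv. apply (Rmult_lt_reg_r (K + 1)); [lra|]. rewrite Rmult_assoc, Rinv_l by lra. lra. }
    nra. }
  lra.
Qed.

Lemma y_cts Q z r K : ODEhyp Q z r K -> forall t, ctsC (y1 Q z) t /\ ctsC (y2 Q z) t.
Proof.
  intros Hyp t. pose proof Hyp as [K0 _].
  split; apply (ctsC_of_lip _ K t K0); intros s; apply (y_lip Q z r K Hyp t s).
Qed.

Definition G1 Q z t : C := (fst z + RIntC (fun s => F1 Q (y1 Q z s, y2 Q z s)) 0 t)%C.
Definition G2 Q z t : C := (snd z + RIntC (fun s => F2 Q (y1 Q z s, y2 Q z s)) 0 t)%C.

Lemma G_deriv Q z r K : ODEhyp Q z r K -> forall t,
  is_derive (G1 Q z) t (F1 Q (y1 Q z t, y2 Q z t)) /\ is_derive (G2 Q z) t (F2 Q (y1 Q z t, y2 Q z t)).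
Proof.
  intros Hyp t.
  assert (C12 : forall u, ctsC (fun s => F1 Q (y1 Q z s, y2 Q z s)) u /\ ctsC (fun s => F2 Q (y1 Q z s, y2 Q z s)) u).
  { intros u. destruct (y_cts Q z r K Hyp u) as [A B]. exact (F_cts Q (y1 Q z) (y2 Q z) u A B). }
  split.
  - exact (prim_derive (fun s => F1 Q (y1 Q z s, y2 Q z s)) (fst z) (fun u => proj1 (C12 u)) t).
  - exact (prim_derive (fun s => F2 Q (y1 Q z s, y2 Q z s)) (snd z) (fun u => proj2 (C12 u)) t).
Qed.

Lemma G_zero Q z : G1 Q z 0 = fst z /\ G2 Q z 0 = snd z.
Proof. unfold G1, G2. split; apply prim_zero. Qed.

Lemma Cminus_eq0 (a b : C) : Cmod (a - b) = 0 -> a = b.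
Proof.
  intros H. apply Cmod_eq_0 in H.
  replace a with ((a - b) + b)%C by ring. rewrite H. ring.
Qed.

Lemma G_eq Q z r K : ODEhyp Q z r K -> forall t, 0 <= t <= 1 ->
  G1 Q z t = y1 Q z t /\ G2 Q z t = y2 Q z t.
Proof.
  intros Hyp t Ht. pose proof Hyp as [K0 [r0 [Hz HK]]].
  set (L := LipC Q r). assert (L0 : 0 <= L) by (apply LipC_ge0; auto).
  destruct (y_approx Q z r K Hyp) as [N HN].
  destruct (G_zero Q z) as [Z1 Z2].
  assert (Main : forall n, (N <= n)%nat ->
    Cmod (G1 Q z t - fst (pic Q z (S n) t)) <= L * (4 * K * (1/2) ^ n) * t /\
    Cmod (G2 Q z t - snd (pic Q z (S n) t)) <= L * (4 * K * (1/2) ^ n) * t).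
  { intros n Hn.
    destruct (pic_zero Q z (S n)) as [P1 P2].
    destruct (Req_dec t 0) as [->|Tn0].
    { rewrite Z1, Z2, P1, P2. replace (fst z - fst z)%C with (RtoC 0) by ring.
      replace (snd z - snd z)%C with (RtoC 0) by ring. rewrite Cmod_0. lra. }
    assert (tpos : 0 < t) by lra.
    set (c := L * (4 * K * (1/2) ^ n)).
    assert (Bf : forall s, 0 < s < t ->
       Cmod (F1 Q (y1 Q z s, y2 Q z s) - F1 Q (pic Q z n s)) <= c /\
       Cmod (F2 Q (y1 Q z s, y2 Q z s) - F2 Q (pic Q z n s)) <= c).
    { intros s Hs. assert (s01 : 0 <= s <= 1) by lra.
      pose proof (pic_inball Q z r K n s Hyp s01) as Pb.
      destruct (y_ball Q z r K Hyp s) as [Y1 Y2]. rewrite clamp_id in Y1, Y2 by auto.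
      pose proof (ball_of_dist (y1 Q z s, y2 Q z s) z K r s Hz K0 s01 Y1 Y2) as Yb.
      destruct (HN n Hn s) as [A1 A2]. rewrite clamp_id in A1, A2 by auto.
      assert (Cn : cnorm2 (fst (y1 Q z s, y2 Q z s) - fst (pic Q z n s)) (snd (y1 Q z s, y2 Q z s) - snd (pic Q z n s))
               <= 4 * K * (1/2) ^ n) by (apply cnorm2_le; auto).
      split.
      - eapply Rle_trans. apply (F1_lip Q r); auto. apply Rmult_le_compat_l; auto.
      - eapply Rle_trans. apply (F2_lip Q r); auto. apply Rmult_le_compat_l; auto. }
    assert (Dv : forall s,
        is_derive (fun s => G1 Q z s - fst (pic Q z (S n) s))%C s
                  (F1 Q (y1 Q z s, y2 Q z s) - F1 Q (pic Q z n s))%C /\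
        is_derive (fun s => G2 Q z s - snd (pic Q z (S n) s))%C s
                  (F2 Q (y1 Q z s, y2 Q z s) - F2 Q (pic Q z n s))%C).
    { intros s. destruct (pic_deriv Q z n s) as [A1 A2]. destruct (G_deriv Q z r K Hyp s) as [B1 B2].
      split; apply is_derive_Cminus; auto. }
    split.
    - replace (G1 Q z t - fst (pic Q z (S n) t))%C with
        ((G1 Q z t - fst (pic Q z (S n) t)) - (G1 Q z 0 - fst (pic Q z (S n) 0)))%C
        by (rewrite Z1, P1; ring).
      replace (c * t) with (c * t - c * 0) by ring.
      pose proof (MVI (fun s => G1 Q z s - fst (pic Q z (S n) s))%C
                      (fun s => F1 Q (y1 Q z s, y2 Q z s) - F1 Q (pic Q z n s))%C
                      (fun s => c * s) (fun _ => c) 0 t) as M.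
      cbv beta in M. apply M; clear M; auto.
      intros s _. apply (proj1 (Dv s)). intros; apply is_derive_lin.
      intros s Hs. apply (proj1 (Bf s Hs)).
      apply rcont_of_deriv. intros u; eexists; apply (proj1 (Dv u)).
      apply lcont_of_deriv. intros u; eexists; apply (proj1 (Dv u)).
    - replace (G2 Q z t - snd (pic Q z (S n) t))%C with
        ((G2 Q z t - snd (pic Q z (S n) t)) - (G2 Q z 0 - snd (pic Q z (S n) 0)))%C
        by (rewrite Z2, P2; ring).
      replace (c * t) with (c * t - c * 0) by ring.
      pose proof (MVI (fun s => G2 Q z s - snd (pic Q z (S n) s))%C
                      (fun s => F2 Q (y1 Q z s, y2 Q z s) - F2 Q (pic Q z n s))%C
                      (fun s => c * s) (fun _ => c) 0 t) as M.
      cbv beta in M. apply M; clear M; auto.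
      intros s _. apply (proj2 (Dv s)). intros; apply is_derive_lin.
      intros s Hs. apply (proj2 (Bf s Hs)).
      apply rcont_of_deriv. intros u; eexists; apply (proj2 (Dv u)).
      apply lcont_of_deriv. intros u; eexists; apply (proj2 (Dv u)). }
  assert (Fin : forall n, (N <= n)%nat ->
     Cmod (G1 Q z t - y1 Q z t) <= 0 + (4 * L * K + 4 * K) * (1/2) ^ n /\
     Cmod (G2 Q z t - y2 Q z t) <= 0 + (4 * L * K + 4 * K) * (1/2) ^ n).
  { intros n Hn. destruct (Main n Hn) as [M1 M2].
    destruct (HN (S n) ltac:(lia) t) as [A1 A2]. rewrite clamp_id in A1, A2 by auto.
    assert (h0 : 0 <= (1/2)^n) by (apply pow_le; lra).
    assert (LK : L * (4 * K * (1/2) ^ n) * t <= 4 * L * K * (1/2) ^ n).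
    { replace (4 * L * K * (1/2) ^ n) with (L * (4 * K * (1/2) ^ n) * 1) by ring.
      apply Rmult_le_compat_l. apply Rmult_le_pos; auto. apply Rmult_le_pos; auto; lra. lra. }
    assert (HS : 4 * K * (1/2) ^ S n <= 4 * K * (1/2) ^ n).
    { simpl pow. assert (0 <= 4 * K) by lra. nra. }
    split.
    - replace (G1 Q z t - y1 Q z t)%C with ((G1 Q z t - fst (pic Q z (S n) t)) - (y1 Q z t - fst (pic Q z (S n) t)))%C by ring.
      eapply Rle_trans. apply Cmod_triangle. rewrite Cmod_opp. lra.
    - replace (G2 Q z t - y2 Q z t)%C with ((G2 Q z t - snd (pic Q z (S n) t)) - (y2 Q z t - snd (pic Q z (S n) t)))%C by ring.
      eapply Rle_trans. apply Cmod_triangle. rewrite Cmod_opp. lra. }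
  assert (c0 : 0 <= 4 * L * K + 4 * K) by (apply Rplus_le_le_0_compat; [apply Rmult_le_pos; [apply Rmult_le_pos|]|]; lra).
  assert (E1 : Cmod (G1 Q z t - y1 Q z t) <= 0) by (apply (small_le _ _ _ N c0); intros n Hn; apply (proj1 (Fin n Hn))).
  assert (E2 : Cmod (G2 Q z t - y2 Q z t) <= 0) by (apply (small_le _ _ _ N c0); intros n Hn; apply (proj2 (Fin n Hn))).
  pose proof (Cmod_ge_0 (G1 Q z t - y1 Q z t)). pose proof (Cmod_ge_0 (G2 Q z t - y2 Q z t)).
  split; apply Cminus_eq0; lra.
Qed.

Lemma ode_exist Q z r K : ODEhyp Q z r K ->
  exists g1 g2 : R -> C, g1 0 = fst z /\ g2 0 = snd z /\
   (forall t, ctsC g1 t /\ ctsC g2 t) /\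
   (forall t, 0 <= t <= 1 ->
      is_derive g1 t (- Ci * dzb1 Q (g1 t) (g2 t))%C /\ is_derive g2 t (- Ci * dzb2 Q (g1 t) (g2 t))%C) /\
   (forall t, 0 <= t <= 1 -> Cmod (g1 t - fst z) <= K * t /\ Cmod (g2 t - snd z) <= K * t).
Proof.
  intros Hyp. exists (G1 Q z), (G2 Q z).
  destruct (G_zero Q z) as [Z1 Z2].
  split; auto. split; auto. split; [|split].
  - intros t. destruct (G_deriv Q z r K Hyp t) as [A B].
    split; [exact (ctsC_of_derive _ _ _ A) | exact (ctsC_of_derive _ _ _ B)].
  - intros t Ht. destruct (G_deriv Q z r K Hyp t) as [A B]. destruct (G_eq Q z r K Hyp t Ht) as [E1 E2].
    unfold F1, F2 in A, B. cbn [fst snd] in A, B. rewrite <- E1, <- E2 in A, B. split; [exact A|exact B].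
  - intros t Ht. destruct (G_eq Q z r K Hyp t Ht) as [E1 E2]. rewrite E1, E2.
    destruct (y_ball Q z r K Hyp t) as [Y1 Y2]. rewrite clamp_id in Y1, Y2 by auto. auto.
Qed.


Lemma Cmod_rev (a b : C) : Rabs (Cmod a - Cmod b) <= Cmod (a - b).
Proof.
  assert (Cmod a <= Cmod b + Cmod (a - b)).
  { replace a with (b + (a - b))%C at 1 by ring. apply Cmod_triangle. }
  assert (Cmod b <= Cmod a + Cmod (a - b)).
  { replace b with (a + - (a - b))%C at 1 by ring. eapply Rle_trans. apply Cmod_triangle. rewrite Cmod_opp. lra. }
  apply Rabs_le; lra.
Qed.

Lemma bounded01 (h : R -> C) : (forall t, 0 < t < 1 -> ctsC h t) -> rcont h 0 -> lcont h 1 ->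
  exists M, forall t, 0 <= t <= 1 -> Cmod (h t) <= M.
Proof.
  intros Hi H0 H1.
  set (f := fun t => Cmod (h (clamp t))).
  assert (Cf : forall c, 0 <= c <= 1 -> continuity_pt f c).
  { intros c Hc. apply continuity_pt_of_ctsR. intros eps Heps.
    destruct (Rle_lt_or_eq_dec 0 c (proj1 Hc)) as [Hc0|Hc0].
    - destruct (Rle_lt_or_eq_dec c 1 (proj2 Hc)) as [Hc1|Hc1].
      + destruct (Hi c (conj Hc0 Hc1) eps Heps) as [d [dp D]].
        exists (Rmin d (Rmin c (1 - c))). split. apply Rmin_pos; auto. apply Rmin_pos; lra.
        intros t Ht. pose proof (Rmin_l d (Rmin c (1 - c))). pose proof (Rmin_r d (Rmin c (1 - c))).
        pose proof (Rmin_l c (1 - c)). pose proof (Rmin_r c (1 - c)).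
        apply Rabs_def2 in Ht as Ht'.
        unfold f. rewrite !clamp_id by lra.
        eapply Rle_lt_trans. apply Cmod_rev. apply D. lra.
      + subst c. destruct (H1 eps Heps) as [d [dp D]].
        exists (Rmin d 1). split. apply Rmin_pos; lra.
        intros t Ht. pose proof (Rmin_l d 1). pose proof (Rmin_r d 1). apply Rabs_def2 in Ht.
        unfold f. rewrite (clamp_id 1) by lra.
        destruct (Rle_or_lt 1 t) as [T1|T1].
        * replace (clamp t) with 1 by (unfold clamp, Rmax, Rmin; repeat destruct Rle_dec; lra).
          rewrite Rminus_diag, Rabs_R0. auto.
        * rewrite clamp_id by lra. eapply Rle_lt_trans. apply Cmod_rev. apply D. lra.
    - subst c. destruct (H0 eps Heps) as [d [dp D]].
      exists (Rmin d 1). split. apply Rmin_pos; lra.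
      intros t Ht. pose proof (Rmin_l d 1). pose proof (Rmin_r d 1). apply Rabs_def2 in Ht.
      unfold f. rewrite (clamp_id 0) by lra.
      destruct (Rle_or_lt t 0) as [T1|T1].
      * replace (clamp t) with 0 by (unfold clamp, Rmax, Rmin; repeat destruct Rle_dec; lra).
        rewrite Rminus_diag, Rabs_R0. auto.
      * rewrite clamp_id by lra. eapply Rle_lt_trans. apply Cmod_rev. apply D. lra. }
  destruct (continuity_ab_maj f 0 1 ltac:(lra) Cf) as [Mx [HM _]].
  exists (f Mx). intros t Ht. specialize (HM t Ht). unfold f in HM. rewrite clamp_id in HM by auto. exact HM.
Qed.

Lemma rcont_minus (h g : R -> C) a : rcont h a -> rcont g a -> rcont (fun t => h t - g t)%C a.
Proof.
  intros Hh Hg eps Heps.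
  destruct (Hh (eps/2) ltac:(lra)) as [d1 [d1p D1]]. destruct (Hg (eps/2) ltac:(lra)) as [d2 [d2p D2]].
  exists (Rmin d1 d2). split. apply Rmin_pos; auto.
  intros t Ht. pose proof (Rmin_l d1 d2). pose proof (Rmin_r d1 d2).
  replace (h t - g t - (h a - g a))%C with ((h t - h a) - (g t - g a))%C by ring.
  eapply Rle_lt_trans. apply Cmod_triangle. rewrite Cmod_opp.
  specialize (D1 t ltac:(lra)). specialize (D2 t ltac:(lra)). lra.
Qed.

Lemma lcont_minus (h g : R -> C) a : lcont h a -> lcont g a -> lcont (fun t => h t - g t)%C a.
Proof.
  intros Hh Hg eps Heps.
  destruct (Hh (eps/2) ltac:(lra)) as [d1 [d1p D1]]. destruct (Hg (eps/2) ltac:(lra)) as [d2 [d2p D2]].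
  exists (Rmin d1 d2). split. apply Rmin_pos; auto.
  intros t Ht. pose proof (Rmin_l d1 d2). pose proof (Rmin_r d1 d2).
  replace (h t - g t - (h a - g a))%C with ((h t - h a) - (g t - g a))%C by ring.
  eapply Rle_lt_trans. apply Cmod_triangle. rewrite Cmod_opp.
  specialize (D1 t ltac:(lra)). specialize (D2 t ltac:(lra)). lra.
Qed.

Lemma zero_of_fact x M0 L : 0 <= M0 -> (forall n, x <= M0 * (L ^ n / INR (fact n))) -> x <= 0.
Proof.
  intros M0p H. destruct (Rle_or_lt x 0) as [|Hx]; auto. exfalso.
  destruct (Req_dec M0 0) as [Z|NZ].
  { specialize (H 0%nat). rewrite Z in H. lra. }
  destruct (cv_speed_pow_fact L (x / M0) ltac:(apply Rdiv_lt_0_compat; lra)) as [N HN].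
  specialize (HN N (le_n N)). specialize (H N). unfold R_dist in HN.
  rewrite Rminus_0_r in HN. apply Rabs_def2 in HN.
  assert (M0 * (L ^ N / INR (fact N)) < M0 * (x / M0)) by (apply Rmult_lt_compat_l; lra).
  replace (M0 * (x / M0)) with x in H0 by (field; lra). lra.
Qed.

Lemma ode_unique Q z1 z2 (g1 g2 h1 h2 : R -> C) :
  g1 0 = z1 -> g2 0 = z2 -> (forall t, ctsC g1 t /\ ctsC g2 t) ->
  (forall t, 0 <= t <= 1 ->
      is_derive g1 t (- Ci * dzb1 Q (g1 t) (g2 t))%C /\ is_derive g2 t (- Ci * dzb2 Q (g1 t) (g2 t))%C) ->
  flow_sol Q z1 z2 h1 h2 -> h1 1 = g1 1 /\ h2 1 = g2 1.
Proof.
  intros G10 G20 Gc Gd [H10 [H20 [Hd [R1 [R2 [L1 L2]]]]]].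
  apply rcont_of_filterlim in R1, R2. apply lcont_of_filterlim in L1, L2.
  assert (Hc : forall t, 0 < t < 1 -> ctsC h1 t /\ ctsC h2 t).
  { intros t Ht. destruct (Hd t Ht) as [A B]. split; eapply ctsC_of_derive; eauto. }
  destruct (bounded01 h1 (fun t Ht => proj1 (Hc t Ht)) R1 L1) as [Mh1 HM1].
  destruct (bounded01 h2 (fun t Ht => proj2 (Hc t Ht)) R2 L2) as [Mh2 HM2].
  destruct (bounded01 g1 (fun t _ => proj1 (Gc t)) (rcont_of_cts _ _ (proj1 (Gc 0))) (lcont_of_cts _ _ (proj1 (Gc 1)))) as [Mg1 GM1].
  destruct (bounded01 g2 (fun t _ => proj2 (Gc t)) (rcont_of_cts _ _ (proj2 (Gc 0))) (lcont_of_cts _ _ (proj2 (Gc 1)))) as [Mg2 GM2].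
  set (rho := Rmax (Rmax Mh1 Mh2) (Rmax (Rmax Mg1 Mg2) 0)).
  assert (rho0 : 0 <= rho) by (unfold rho; eapply Rle_trans; [|apply Rmax_r]; apply Rmax_r).
  assert (Bh : forall t, 0 <= t <= 1 -> cnorm2 (h1 t) (h2 t) <= rho).
  { intros t Ht. apply cnorm2_le; unfold rho.
    - eapply Rle_trans; [apply HM1; auto|]. eapply Rle_trans; [|apply Rmax_l]. apply Rmax_l.
    - eapply Rle_trans; [apply HM2; auto|]. eapply Rle_trans; [|apply Rmax_l]. apply Rmax_r. }
  assert (Bg : forall t, 0 <= t <= 1 -> cnorm2 (g1 t) (g2 t) <= rho).
  { intros t Ht. apply cnorm2_le; unfold rho.
    - eapply Rle_trans; [apply GM1; auto|]. eapply Rle_trans; [|apply Rmax_r].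
      eapply Rle_trans; [|apply Rmax_l]. apply Rmax_l.
    - eapply Rle_trans; [apply GM2; auto|]. eapply Rle_trans; [|apply Rmax_r].
      eapply Rle_trans; [|apply Rmax_l]. apply Rmax_r. }
  set (L := LipC Q rho). assert (L0 : 0 <= L) by (apply LipC_ge0; auto).
  set (M0 := 2 * rho).
  assert (Ind : forall n t, 0 <= t <= 1 ->
     Cmod (h1 t - g1 t) <= M0 * L ^ n * t ^ n / INR (fact n) /\
     Cmod (h2 t - g2 t) <= M0 * L ^ n * t ^ n / INR (fact n)).
  { induction n as [|n IH]; intros t Ht.
    - simpl. replace (M0 * 1 * 1 / 1) with M0 by field.
      pose proof (Bh t Ht). pose proof (Bg t Ht).
      pose proof (cnorm2_l (h1 t) (h2 t)). pose proof (cnorm2_r (h1 t) (h2 t)).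
      pose proof (cnorm2_l (g1 t) (g2 t)). pose proof (cnorm2_r (g1 t) (g2 t)).
      unfold M0. split.
      + eapply Rle_trans. apply Cmod_triangle. rewrite Cmod_opp. lra.
      + eapply Rle_trans. apply Cmod_triangle. rewrite Cmod_opp. lra.
    - set (c := M0 * L ^ S n).
      assert (E : forall j : C, (Cmod j <= c * t ^ S n / INR (fact (S n)) - c * 0 ^ S n / INR (fact (S n))) ->
                   Cmod j <= M0 * L ^ S n * t ^ S n / INR (fact (S n))).
      { intros j Hj. unfold c in Hj. change (0 ^ S n) with (0 * 0 ^ n) in Hj.
        replace (M0 * L ^ S n * 0 * 0 ^ n / INR (fact (S n))) with 0 in Hj by (field; apply INR_fact_neq_0).
        lra. }
      destruct (Req_dec t 0) as [->|Tn0].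
      { rewrite H10, H20, G10, G20. replace (z1 - z1)%C with (RtoC 0) by ring.
        replace (z2 - z2)%C with (RtoC 0) by ring. rewrite Cmod_0.
        rewrite pow_i by lia. unfold Rdiv. rewrite Rmult_0_r, Rmult_0_l. lra. }
      assert (tpos : 0 < t) by lra.
      assert (Hphi : forall s, is_derive (fun s => c * s ^ S n / INR (fact (S n))) s
                                         (c * s ^ n / INR (fact n))) by (intros; apply is_derive_powfact).
      assert (Bf : forall s, 0 < s < t ->
         Cmod (F1 Q (h1 s, h2 s) - F1 Q (g1 s, g2 s)) <= c * s ^ n / INR (fact n) /\
         Cmod (F2 Q (h1 s, h2 s) - F2 Q (g1 s, g2 s)) <= c * s ^ n / INR (fact n)).
      { intros s Hs. assert (s01 : 0 <= s <= 1) by lra.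
        destruct (IH s s01) as [I1 I2].
        assert (Cn : cnorm2 (fst (h1 s, h2 s) - fst (g1 s, g2 s)) (snd (h1 s, h2 s) - snd (g1 s, g2 s))
                <= M0 * L ^ n * s ^ n / INR (fact n)) by (apply cnorm2_le; auto).
        replace (c * s ^ n / INR (fact n)) with (L * (M0 * L ^ n * s ^ n / INR (fact n)))
          by (unfold c; change (L ^ S n) with (L * L ^ n); field; apply INR_fact_neq_0).
        split.
        - eapply Rle_trans. apply (F1_lip Q rho); auto. apply Bh; auto. apply Bg; auto.
          apply Rmult_le_compat_l; auto.
        - eapply Rle_trans. apply (F2_lip Q rho); auto. apply Bh; auto. apply Bg; auto.
          apply Rmult_le_compat_l; auto. }
      assert (Dv : forall s, 0 < s < t ->
        is_derive (fun s => h1 s - g1 s)%C s (F1 Q (h1 s, h2 s) - F1 Q (g1 s, g2 s))%C /\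
        is_derive (fun s => h2 s - g2 s)%C s (F2 Q (h1 s, h2 s) - F2 Q (g1 s, g2 s))%C).
      { intros s Hs. destruct (Hd s ltac:(lra)) as [A1 A2]. destruct (Gd s ltac:(lra)) as [B1 B2].
        split; apply is_derive_Cminus; auto. }
      assert (Lc : lcont h1 t /\ lcont h2 t).
      { destruct (Rle_lt_or_eq_dec t 1 (proj2 Ht)) as [T1|T1].
        - destruct (Hc t ltac:(lra)) as [A B]. split; apply lcont_of_cts; auto.
        - subst t. auto. }
      split.
      + apply E.
        replace (h1 t - g1 t)%C with ((h1 t - g1 t) - (h1 0 - g1 0))%C by (rewrite H10, G10; ring).
        pose proof (MVI (fun s => h1 s - g1 s)%C (fun s => F1 Q (h1 s, h2 s) - F1 Q (g1 s, g2 s))%C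
                        (fun s => c * s ^ S n / INR (fact (S n))) (fun s => c * s ^ n / INR (fact n)) 0 t) as M.
        cbv beta in M. apply M; clear M; auto.
        intros s Hs. apply (proj1 (Dv s Hs)).
        intros s Hs. apply (proj1 (Bf s Hs)).
        apply rcont_minus; auto. apply rcont_of_cts, Gc.
        apply lcont_minus. apply Lc. apply lcont_of_cts, Gc.
      + apply E.
        replace (h2 t - g2 t)%C with ((h2 t - g2 t) - (h2 0 - g2 0))%C by (rewrite H20, G20; ring).
        pose proof (MVI (fun s => h2 s - g2 s)%C (fun s => F2 Q (h1 s, h2 s) - F2 Q (g1 s, g2 s))%C
                        (fun s => c * s ^ S n / INR (fact (S n))) (fun s => c * s ^ n / INR (fact n)) 0 t) as M.
        cbv beta in M. apply M; clear M; auto.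
        intros s Hs. apply (proj2 (Dv s Hs)).
        intros s Hs. apply (proj2 (Bf s Hs)).
        apply rcont_minus; auto. apply rcont_of_cts, Gc.
        apply lcont_minus. apply Lc. apply lcont_of_cts, Gc. }
  assert (M0p : 0 <= M0) by (unfold M0; lra).
  assert (Z1 : Cmod (h1 1 - g1 1) <= 0).
  { apply (zero_of_fact _ M0 L M0p). intros n. destruct (Ind n 1 ltac:(lra)) as [A _].
    rewrite pow1 in A. unfold Rdiv in *. rewrite <- Rmult_assoc. lra. }
  assert (Z2 : Cmod (h2 1 - g2 1) <= 0).
  { apply (zero_of_fact _ M0 L M0p). intros n. destruct (Ind n 1 ltac:(lra)) as [_ A].
    rewrite pow1 in A. unfold Rdiv in *. rewrite <- Rmult_assoc. lra. }
  pose proof (Cmod_ge_0 (h1 1 - g1 1)). pose proof (Cmod_ge_0 (h2 1 - g2 1)).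
  split; apply Cminus_eq0; lra.
Qed.


Lemma is_derive_lsumC l (F : nat -> nat -> nat -> nat -> R -> C) (D : nat -> nat -> nat -> nat -> C) t :
  (forall a1 a2 b1 b2, In (a1, a2, b1, b2) l -> is_derive (F a1 a2 b1 b2) t (D a1 a2 b1 b2)) ->
  is_derive (fun t => lsumC l (fun a1 a2 b1 b2 => F a1 a2 b1 b2 t)) t (lsumC l D).
Proof.
  induction l as [|[[[a1 a2] b1] b2] l IH]; intros H; unfold lsumC in *; simpl.
  - apply is_derive_Cconst.
  - apply (is_derive_Cplus (F a1 a2 b1 b2) (fun t => fold_right Cplus 0%C
       (map (fun '(a1, a2, b1, b2) => F a1 a2 b1 b2 t) l))).
    apply H; left; auto. apply IH. intros; apply H; right; auto.
Qed.

Lemma lsumC_scal_r l c F :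
  lsumC l (fun a1 a2 b1 b2 => F a1 a2 b1 b2 * c)%C = (lsumC l F * c)%C.
Proof.
  induction l as [|[[[a1 a2] b1] b2] l IH]; unfold lsumC in *; simpl.
  - ring.
  - rewrite IH. ring.
Qed.

Lemma mono_deriv (P : C) (g1 g2 : R -> C) t d1 d2 a1 a2 b1 b2 :
  is_derive g1 t d1 -> is_derive g2 t d2 ->
  is_derive (fun t => P * g1 t ^ a1 * g2 t ^ a2 * Cconj (g1 t) ^ b1 * Cconj (g2 t) ^ b2)%C t
   ((P * RtoC (INR a1) * g1 t ^ (a1 - 1) * g2 t ^ a2 * Cconj (g1 t) ^ b1 * Cconj (g2 t) ^ b2) * d1
  + (P * RtoC (INR a2) * g1 t ^ a1 * g2 t ^ (a2 - 1) * Cconj (g1 t) ^ b1 * Cconj (g2 t) ^ b2) * d2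
  + (P * RtoC (INR b1) * g1 t ^ a1 * g2 t ^ a2 * Cconj (g1 t) ^ (b1 - 1) * Cconj (g2 t) ^ b2) * Cconj d1
  + (P * RtoC (INR b2) * g1 t ^ a1 * g2 t ^ a2 * Cconj (g1 t) ^ b1 * Cconj (g2 t) ^ (b2 - 1)) * Cconj d2)%C.
Proof.
  intros H1 H2.
  pose proof (is_derive_Cconj _ _ _ H1) as C1. pose proof (is_derive_Cconj _ _ _ H2) as C2.
  pose proof (is_derive_Cpow _ _ _ a1 H1) as P1. pose proof (is_derive_Cpow _ _ _ a2 H2) as P2.
  pose proof (is_derive_Cpow _ _ _ b1 C1) as P3. pose proof (is_derive_Cpow _ _ _ b2 C2) as P4.
  pose proof (is_derive_Cscal P _ _ _ P1) as Q1.
  pose proof (is_derive_Cmult _ _ _ _ _ Q1 P2) as Q2.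
  pose proof (is_derive_Cmult _ _ _ _ _ Q2 P3) as Q3.
  pose proof (is_derive_Cmult _ _ _ _ _ Q3 P4) as Q4.
  eapply is_derive_eqC. exact Q4. cbv beta. ring.
Qed.

Lemma qeval_deriv P (g1 g2 : R -> C) t d1 d2 :
  is_derive g1 t d1 -> is_derive g2 t d2 ->
  is_derive (fun t => qeval P (g1 t) (g2 t)) t
    (dz1 P (g1 t) (g2 t) * d1 + dz2 P (g1 t) (g2 t) * d2
     + dzb1 P (g1 t) (g2 t) * Cconj d1 + dzb2 P (g1 t) (g2 t) * Cconj d2)%C.
Proof.
  intros H1 H2.
  apply (is_derive_ext (fun t => lsumC quartic_idx (fun a1 a2 b1 b2 =>
     P a1 a2 b1 b2 * g1 t ^ a1 * g2 t ^ a2 * Cconj (g1 t) ^ b1 * Cconj (g2 t) ^ b2)%C)).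
  { intros; reflexivity. }
  eapply is_derive_eqC.
  - apply (is_derive_lsumC quartic_idx (fun a1 a2 b1 b2 t =>
       P a1 a2 b1 b2 * g1 t ^ a1 * g2 t ^ a2 * Cconj (g1 t) ^ b1 * Cconj (g2 t) ^ b2)%C).
    intros a1 a2 b1 b2 _. apply (mono_deriv _ g1 g2 t d1 d2); auto.
  - unfold dz1, dz2, dzb1, dzb2. repeat change (qsumC ?F) with (lsumC quartic_idx F).
    rewrite <- !lsumC_scal_r, <- !lsumC_plus. reflexivity.
Qed.

Lemma conj_dzb1 P z1 z2 :
  (Cconj z1 * dzb1 P z1 z2)%C = qeval (fun a1 a2 b1 b2 => RtoC (INR b1) * P a1 a2 b1 b2)%C z1 z2.
Proof.
  unfold dzb1, qeval. rewrite !qsumC_l, <- lsumC_scal. apply lsumC_ext_in. intros a1 a2 b1 b2 _.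
  destruct b1 as [|k].
  - change (INR 0) with 0. ring.
  - rewrite S_INR, RtoC_plus. replace (S k - 1)%nat with k by lia.
    change (Cconj z1 ^ S k)%C with (Cconj z1 * Cconj z1 ^ k)%C. ring.
Qed.

Lemma conj_dzb2 P z1 z2 :
  (Cconj z2 * dzb2 P z1 z2)%C = qeval (fun a1 a2 b1 b2 => RtoC (INR b2) * P a1 a2 b1 b2)%C z1 z2.
Proof.
  unfold dzb2, qeval. rewrite !qsumC_l, <- lsumC_scal. apply lsumC_ext_in. intros a1 a2 b1 b2 _.
  destruct b2 as [|k].
  - change (INR 0) with 0. ring.
  - rewrite S_INR, RtoC_plus. replace (S k - 1)%nat with k by lia.
    change (Cconj z2 ^ S k)%C with (Cconj z2 * Cconj z2 ^ k)%C. ring.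
Qed.

Lemma conj_qeval P z1 z2 :
  Cconj (qeval P z1 z2) = qeval (fun a1 a2 b1 b2 => Cconj (P b1 b2 a1 a2)) z1 z2.
Proof.
  unfold qeval. rewrite qsumC_swap. rewrite !qsumC_l, lsumC_conj. apply lsumC_ext_in.
  intros a1 a2 b1 b2 _. rewrite !Cmult_conj, !Cpow_conj, !Cconj_conj. ring.
Qed.

Lemma Cconj_RtoC (x : R) : Cconj (RtoC x) = RtoC x.
Proof. unfold Cconj, RtoC; simpl. apply injective_projections; simpl; ring. Qed.

Lemma qeval_lin2 (c1 c2 : C) P1 P2 z1 z2 :
  (c1 * qeval P1 z1 z2 + c2 * qeval P2 z1 z2)%C =
  qeval (fun a1 a2 b1 b2 => c1 * P1 a1 a2 b1 b2 + c2 * P2 a1 a2 b1 b2)%C z1 z2.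
Proof.
  unfold qeval. repeat change (qsumC ?F) with (lsumC quartic_idx F).
  rewrite <- !lsumC_scal, <- lsumC_plus. apply lsumC_ext_in.
  intros; ring.
Qed.

Lemma wdot_nz wm wp a1 a2 b1 b2 : 0 < wm -> wm < wp -> wp <> 3 * wm ->
  In (a1, a2, b1, b2) quartic_idx -> (Nat.eqb a1 b1 && Nat.eqb a2 b2)%bool = false ->
  wdot wm wp a1 a2 b1 b2 <> 0.
Proof.
  intros H0 H1 H3 Hin E. unfold quartic_idx in Hin. simpl in Hin.
  repeat (destruct Hin as [Hin|Hin]; [injection Hin; intros; subst; simpl in E;
     try discriminate; unfold wdot; simpl INR; intro Hc; first [lra | apply H3; lra] |]).
  destruct Hin.
Qed.

Lemma Ci2 : (Ci * Ci = - RtoC 1)%C.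
Proof. apply injective_projections; simpl; ring. Qed.

Lemma homol_term Phi wm wp M3 N3 a1 a2 b1 b2 : 0 < wm -> wm < wp -> wp <> 3 * wm ->
  In (a1, a2, b1, b2) quartic_idx ->
  (Ci * RtoC (wdot wm wp a1 a2 b1 b2) * Sc Phi wm wp M3 N3 a1 a2 b1 b2)%C = (- Ghat Phi wm wp M3 N3 a1 a2 b1 b2)%C.
Proof.
  intros H0 H1 H3 Hin. unfold Sc, Ghat, H4bar.
  destruct (Nat.eqb a1 b1 && Nat.eqb a2 b2)%bool eqn:E.
  - ring.
  - pose proof (wdot_nz wm wp a1 a2 b1 b2 H0 H1 H3 Hin E) as W.
    assert (W' : RtoC (wdot wm wp a1 a2 b1 b2) <> RtoC 0).
    { intro Hc. apply W. injection Hc. auto. }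
    generalize (Gc Phi wm wp M3 N3 a1 a2 b1 b2). intros G.
    revert W'. generalize (RtoC (wdot wm wp a1 a2 b1 b2)). intros w Hw.
    replace (Ci * w * (Ci * G / w))%C with ((Ci * Ci) * (w * (G / w)))%C by (field; exact Hw).
    rewrite Ci2. field. exact Hw.
Qed.

Lemma qeval_ext_in (P P' : qpoly) z1 z2 :
  (forall a1 a2 b1 b2, In (a1, a2, b1, b2) quartic_idx -> P a1 a2 b1 b2 = P' a1 a2 b1 b2) ->
  qeval P z1 z2 = qeval P' z1 z2.
Proof.
  intros H. unfold qeval. repeat change (qsumC ?F) with (lsumC quartic_idx F).
  apply lsumC_ext_in. intros. rewrite H; auto.
Qed.

Lemma qeval_opp (P : qpoly) z1 z2 : (- qeval P z1 z2)%C = qeval (fun a1 a2 b1 b2 => - P a1 a2 b1 b2)%C z1 z2.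
Proof.
  unfold qeval. repeat change (qsumC ?F) with (lsumC quartic_idx F).
  replace (- lsumC quartic_idx (fun a1 a2 b1 b2 => P a1 a2 b1 b2 * z1 ^ a1 * z2 ^ a2 * Cconj z1 ^ b1 * Cconj z2 ^ b2))%C
    with (- RtoC 1 * lsumC quartic_idx (fun a1 a2 b1 b2 => P a1 a2 b1 b2 * z1 ^ a1 * z2 ^ a2 * Cconj z1 ^ b1 * Cconj z2 ^ b2))%C by ring.
  rewrite <- lsumC_scal. apply lsumC_ext_in. intros; ring.
Qed.

Lemma qeval_plus (P1 P2 : qpoly) z1 z2 :
  (qeval P1 z1 z2 + qeval P2 z1 z2)%C = qeval (fun a1 a2 b1 b2 => P1 a1 a2 b1 b2 + P2 a1 a2 b1 b2)%C z1 z2.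
Proof.
  unfold qeval. repeat change (qsumC ?F) with (lsumC quartic_idx F).
  rewrite <- lsumC_plus. apply lsumC_ext_in. intros; ring.
Qed.

Lemma conj_mCi_dzb1 P z1 z2 :
  (z1 * Cconj (- Ci * dzb1 P z1 z2))%C =
  (Ci * qeval (fun a1 a2 b1 b2 => Cconj (RtoC (INR a1) * P b1 b2 a1 a2)) z1 z2)%C.
Proof.
  rewrite <- conj_qeval, <- conj_dzb1. rewrite !Cmult_conj, Cconj_conj.
  replace (Cconj (- Ci)) with Ci by (apply injective_projections; simpl; ring). ring.
Qed.

Lemma conj_mCi_dzb2 P z1 z2 :
  (z2 * Cconj (- Ci * dzb2 P z1 z2))%C =
  (Ci * qeval (fun a1 a2 b1 b2 => Cconj (RtoC (INR a2) * P b1 b2 a1 a2)) z1 z2)%C.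
Proof.
  rewrite <- conj_qeval, <- conj_dzb2. rewrite !Cmult_conj, Cconj_conj.
  replace (Cconj (- Ci)) with Ci by (apply injective_projections; simpl; ring). ring.
Qed.

Lemma homol Phi wm wp M3 N3 z1 z2 : 0 < wm -> wm < wp -> wp <> 3 * wm ->
  (RtoC wm * ((- Ci * dzb1 (Sc Phi wm wp M3 N3) z1 z2) * Cconj z1 + z1 * Cconj (- Ci * dzb1 (Sc Phi wm wp M3 N3) z1 z2))
 + RtoC wp * ((- Ci * dzb2 (Sc Phi wm wp M3 N3) z1 z2) * Cconj z2 + z2 * Cconj (- Ci * dzb2 (Sc Phi wm wp M3 N3) z1 z2)))%C
  = (- qeval (Ghat Phi wm wp M3 N3) z1 z2)%C.
Proof.
  intros H0 H1 H3.
  set (S := Sc Phi wm wp M3 N3).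
  rewrite conj_mCi_dzb1, conj_mCi_dzb2.
  replace ((- Ci * dzb1 S z1 z2) * Cconj z1)%C with (- Ci * (Cconj z1 * dzb1 S z1 z2))%C by ring.
  replace ((- Ci * dzb2 S z1 z2) * Cconj z2)%C with (- Ci * (Cconj z2 * dzb2 S z1 z2))%C by ring.
  rewrite conj_dzb1, conj_dzb2.
  rewrite qeval_opp.
  set (Q1 := qeval (fun a1 a2 b1 b2 => RtoC (INR b1) * S a1 a2 b1 b2)%C z1 z2).
  set (Q2 := qeval (fun a1 a2 b1 b2 => Cconj (RtoC (INR a1) * S b1 b2 a1 a2)) z1 z2).
  set (Q3 := qeval (fun a1 a2 b1 b2 => RtoC (INR b2) * S a1 a2 b1 b2)%C z1 z2).
  set (Q4 := qeval (fun a1 a2 b1 b2 => Cconj (RtoC (INR a2) * S b1 b2 a1 a2)) z1 z2).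
  replace (RtoC wm * (- Ci * Q1 + Ci * Q2) + RtoC wp * (- Ci * Q3 + Ci * Q4))%C
    with ((RtoC wm * - Ci * Q1 + RtoC wm * Ci * Q2) + (RtoC wp * - Ci * Q3 + RtoC wp * Ci * Q4))%C by ring.
  unfold Q1, Q2, Q3, Q4. rewrite !qeval_lin2, qeval_plus.
  apply qeval_ext_in. intros a1 a2 b1 b2 Hin.
  rewrite <- (homol_term Phi wm wp M3 N3 a1 a2 b1 b2 H0 H1 H3 Hin). unfold S.
  rewrite !Cmult_conj, !Cconj_RtoC, !Sc_conj.
  unfold wdot. rewrite RtoC_plus, !RtoC_mult, !RtoC_minus. ring.
Qed.


Lemma Cmod2_RtoC (c : C) : RtoC (Cmod c ^ 2) = (c * Cconj c)%C.
Proof.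
  rewrite Cmod2_alt. unfold Re, Im. apply injective_projections; simpl; ring.
Qed.

Lemma Nfun_alt wm wp a b : Nfun wm wp a b = (RtoC wm * (a * Cconj a) + RtoC wp * (b * Cconj b))%C.
Proof. unfold Nfun. rewrite RtoC_plus, !RtoC_mult, !Cmod2_RtoC. reflexivity. Qed.

Lemma Nfun_deriv wm wp (g1 g2 : R -> C) t d1 d2 :
  is_derive g1 t d1 -> is_derive g2 t d2 ->
  is_derive (fun t => Nfun wm wp (g1 t) (g2 t)) t
    (RtoC wm * (d1 * Cconj (g1 t) + g1 t * Cconj d1) + RtoC wp * (d2 * Cconj (g2 t) + g2 t * Cconj d2))%C.
Proof.
  intros H1 H2.
  apply (is_derive_ext (fun t => RtoC wm * (g1 t * Cconj (g1 t)) + RtoC wp * (g2 t * Cconj (g2 t)))%C).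
  { intros; rewrite Nfun_alt; reflexivity. }
  apply is_derive_Cplus; apply is_derive_Cscal; apply is_derive_Cmult; auto; apply is_derive_Cconj; auto.
Qed.

Definition dP (P S : qpoly) z1 z2 : C :=
  (dz1 P z1 z2 * (- Ci * dzb1 S z1 z2) + dz2 P z1 z2 * (- Ci * dzb2 S z1 z2)
   + dzb1 P z1 z2 * Cconj (- Ci * dzb1 S z1 z2) + dzb2 P z1 z2 * Cconj (- Ci * dzb2 S z1 z2))%C.

Lemma dP_bound P S z1 z2 rho : 0 <= rho -> Cmod z1 <= rho -> Cmod z2 <= rho ->
  (forall a1 a2 b1 b2, Cmod (P b1 b2 a1 a2) = Cmod (P a1 a2 b1 b2)) ->
  (forall a1 a2 b1 b2, Cmod (S b1 b2 a1 a2) = Cmod (S a1 a2 b1 b2)) ->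
  Cmod (dP P S z1 z2) <= 2 * (qnorm1 P * qnorm1 S + qnorm2 P * qnorm2 S) * rho ^ 6.
Proof.
  intros r0 H1 H2 SP SS. unfold dP.
  pose proof (dz1_bound P z1 z2 rho r0 H1 H2) as A1. rewrite wt1_q in A1.
  pose proof (dz2_bound P z1 z2 rho r0 H1 H2) as A2. rewrite wt2_q in A2.
  pose proof (dzb1_bound P z1 z2 rho r0 H1 H2) as A3. rewrite (wtb1_sym P SP) in A3.
  pose proof (dzb2_bound P z1 z2 rho r0 H1 H2) as A4. rewrite (wtb2_sym P SP) in A4.
  pose proof (dzb1_bound S z1 z2 rho r0 H1 H2) as B1. rewrite (wtb1_sym S SS) in B1.
  pose proof (dzb2_bound S z1 z2 rho r0 H1 H2) as B2. rewrite (wtb2_sym S SS) in B2.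
  eapply Rle_trans. apply Cmod_triangle. eapply Rle_trans. apply Rplus_le_compat_r. apply Cmod_triangle.
  eapply Rle_trans. apply Rplus_le_compat_r. apply Rplus_le_compat_r. apply Cmod_triangle.
  rewrite !Cmod_mult, !Cmod_conj, !Cmod_mult, !Cmod_opp, Cmod_Ci, !Rmult_1_l.
  pose proof (Cmod_ge_0 (dz1 P z1 z2)). pose proof (Cmod_ge_0 (dz2 P z1 z2)).
  pose proof (Cmod_ge_0 (dzb1 P z1 z2)). pose proof (Cmod_ge_0 (dzb2 P z1 z2)).
  pose proof (Cmod_ge_0 (dzb1 S z1 z2)). pose proof (Cmod_ge_0 (dzb2 S z1 z2)).
  assert (X1 : Cmod (dz1 P z1 z2) * Cmod (dzb1 S z1 z2) <= qnorm1 P * rho ^ 3 * (qnorm1 S * rho ^ 3)) by (apply Rmult_le_compat; auto).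
  assert (X2 : Cmod (dz2 P z1 z2) * Cmod (dzb2 S z1 z2) <= qnorm2 P * rho ^ 3 * (qnorm2 S * rho ^ 3)) by (apply Rmult_le_compat; auto).
  assert (X3 : Cmod (dzb1 P z1 z2) * Cmod (dzb1 S z1 z2) <= qnorm1 P * rho ^ 3 * (qnorm1 S * rho ^ 3)) by (apply Rmult_le_compat; auto).
  assert (X4 : Cmod (dzb2 P z1 z2) * Cmod (dzb2 S z1 z2) <= qnorm2 P * rho ^ 3 * (qnorm2 S * rho ^ 3)) by (apply Rmult_le_compat; auto).
  replace (2 * (qnorm1 P * qnorm1 S + qnorm2 P * qnorm2 S) * rho ^ 6) with
    (qnorm1 P * rho ^ 3 * (qnorm1 S * rho ^ 3) + qnorm2 P * rho ^ 3 * (qnorm2 S * rho ^ 3)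
     + qnorm1 P * rho ^ 3 * (qnorm1 S * rho ^ 3) + qnorm2 P * rho ^ 3 * (qnorm2 S * rho ^ 3)) by ring.
  lra.
Qed.

Lemma is_derive_id_C (t : R) : is_derive (fun t : R => RtoC t) t (RtoC 1).
Proof. apply is_derive_RtoC. eapply is_derive_eq. apply is_derive_id. reflexivity. Qed.

Lemma psi_deriv Phi wm wp M3 N3 (g1 g2 : R -> C) t : 0 < wm -> wm < wp -> wp <> 3 * wm ->
  is_derive g1 t (- Ci * dzb1 (Sc Phi wm wp M3 N3) (g1 t) (g2 t))%C ->
  is_derive g2 t (- Ci * dzb2 (Sc Phi wm wp M3 N3) (g1 t) (g2 t))%C ->
  is_derive (fun t => Nfun wm wp (g1 t) (g2 t) + qeval (H4bar Phi wm wp M3 N3) (g1 t) (g2 t)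
                      + RtoC t * qeval (Ghat Phi wm wp M3 N3) (g1 t) (g2 t))%C t
    (dP (H4bar Phi wm wp M3 N3) (Sc Phi wm wp M3 N3) (g1 t) (g2 t)
     + RtoC t * dP (Ghat Phi wm wp M3 N3) (Sc Phi wm wp M3 N3) (g1 t) (g2 t))%C.
Proof.
  intros H0 H1 H3 D1 D2.
  pose proof (Nfun_deriv wm wp g1 g2 t _ _ D1 D2) as DN.
  pose proof (qeval_deriv (H4bar Phi wm wp M3 N3) g1 g2 t _ _ D1 D2) as DH.
  pose proof (qeval_deriv (Ghat Phi wm wp M3 N3) g1 g2 t _ _ D1 D2) as DG.
  pose proof (is_derive_Cmult _ _ _ _ _ (is_derive_id_C t) DG) as DtG.
  pose proof (is_derive_Cplus _ _ _ _ _ (is_derive_Cplus _ _ _ _ _ DN DH) DtG) as All.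
  eapply is_derive_eqC. exact All.
  pose proof (homol Phi wm wp M3 N3 (g1 t) (g2 t) H0 H1 H3) as Hm.
  unfold dP.
  set (S := Sc Phi wm wp M3 N3) in *.
  set (e1 := (- Ci * dzb1 S (g1 t) (g2 t))%C) in *.
  set (e2 := (- Ci * dzb2 S (g1 t) (g2 t))%C) in *.
  replace (RtoC wm * (e1 * Cconj (g1 t) + g1 t * Cconj e1) + RtoC wp * (e2 * Cconj (g2 t) + g2 t * Cconj e2))%C
    with (- qeval (Ghat Phi wm wp M3 N3) (g1 t) (g2 t))%C by (rewrite <- Hm; reflexivity).
  ring.
Qed.

Lemma qeval_Gc_split Phi wm wp M3 N3 z1 z2 :
  qeval (Gc Phi wm wp M3 N3) z1 z2 = (qeval (H4bar Phi wm wp M3 N3) z1 z2 + qeval (Ghat Phi wm wp M3 N3) z1 z2)%C.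
Proof.
  rewrite qeval_plus. apply qeval_ext_in. intros. unfold Ghat. ring.
Qed.

Lemma qnorm1_ge0 P : 0 <= qnorm1 P.
Proof. unfold qnorm1. rewrite qsumR_l. apply lsumR_ge0. intros. apply Rmult_le_pos. apply pos_INR. apply Cmod_ge_0. Qed.
Lemma qnorm2_ge0 P : 0 <= qnorm2 P.
Proof. unfold qnorm2. rewrite qsumR_l. apply lsumR_ge0. intros. apply Rmult_le_pos. apply pos_INR. apply Cmod_ge_0. Qed.

Lemma psi_diff Phi wm wp M3 N3 (g1 g2 : R -> C) z1 z2 : 0 < wm -> 0 < wp -> g1 0 = z1 -> g2 0 = z2 ->
  ((Nfun wm wp (g1 1) (g2 1) + qeval (H4bar Phi wm wp M3 N3) (g1 1) (g2 1) + RtoC 1 * qeval (Ghat Phi wm wp M3 N3) (g1 1) (g2 1))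
   - (Nfun wm wp (g1 0) (g2 0) + qeval (H4bar Phi wm wp M3 N3) (g1 0) (g2 0) + RtoC 0 * qeval (Ghat Phi wm wp M3 N3) (g1 0) (g2 0)))%C
  = (Hfun Phi wm wp M3 N3 (g1 1) (g2 1) - Nfun wm wp z1 z2 - qeval (H4bar Phi wm wp M3 N3) z1 z2)%C.
Proof.
  intros Hm Hp E1 E2. unfold Hfun. rewrite E1, E2.
  rewrite (Gfun_expansion Phi wm wp M3 N3 (g1 1) (g2 1) Hm Hp).
  rewrite qeval_Gc_split. rewrite Cmult_1_l, Cmult_0_l, Cplus_0_r. ring.
Qed.

Theorem corollary4p4 (Mm Km Phi : mat2) (wm wp M3 N3 r delta : R) :
  (* M symmetric positive definite, K diagonal positive definite *)
  symmetric2 Mm -> posdef2 Mm -> diagonal2 Km -> posdef2 Km ->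
  (* omega_-^2 < omega_+^2 are the eigenvalues of M^{-1} K, 0 < omega_- < omega_+ *)
  0 < wm -> wm < wp ->
  (forall lam, eigenvalue2 (mmul (inv2 Mm) Km) lam <-> lam = wm ^ 2 \/ lam = wp ^ 2) ->
  (* Phi^T M Phi = I, Phi^T K Phi = diag(omega_-^2, omega_+^2) *)
  meq (mmul (mtr Phi) (mmul Mm Phi)) (mdiag 1 1) ->
  meq (mmul (mtr Phi) (mmul Km Phi)) (mdiag (wm ^ 2) (wp ^ 2)) ->
  wp <> 3 * wm ->
  0 < r -> 0 < delta < 1 ->
  r ^ 2 * qstar (Sc Phi wm wp M3 N3) <= 1 - delta ->
  (forall z1 z2 : C, cnorm2 z1 z2 <= r ->
     gradnorm (Sc Phi wm wp M3 N3) z1 z2 <= (1 - delta) * r) /\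
  (forall z1 z2 : C, cnorm2 z1 z2 <= delta * r ->
     exists g1 g2 : R -> C,
       flow_sol (Sc Phi wm wp M3 N3) z1 z2 g1 g2 /\
       (forall h1 h2 : R -> C, flow_sol (Sc Phi wm wp M3 N3) z1 z2 h1 h2 ->
          h1 1 = g1 1 /\ h2 1 = g2 1) /\
       cnorm2 (g1 1) (g2 1) <= r /\
       cnorm2 (g1 1 - z1)%C (g2 1 - z2)%C <= r ^ 3 * qstar (Sc Phi wm wp M3 N3) /\
       Cmod (Hfun Phi wm wp M3 N3 (g1 1) (g2 1) - Nfun wm wp z1 z2
             - qeval (H4bar Phi wm wp M3 N3) z1 z2)%C
         <= (qnorm1 (Sc Phi wm wp M3 N3)
               * (2 * qnorm1 (H4bar Phi wm wp M3 N3) + qnorm1 (Ghat Phi wm wp M3 N3))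
             + qnorm2 (Sc Phi wm wp M3 N3)
               * (2 * qnorm2 (H4bar Phi wm wp M3 N3) + qnorm2 (Ghat Phi wm wp M3 N3)))
            * r ^ 6).
Proof.
  intros _ _ _ _ Hwm Hwmp _ _ _ H3 Hr Hd Hstar.
  assert (SS : forall a1 a2 b1 b2, Cmod (Sc Phi wm wp M3 N3 b1 b2 a1 a2) = Cmod (Sc Phi wm wp M3 N3 a1 a2 b1 b2))
    by (intros; apply Sc_mod_sym).
  assert (SH : forall a1 a2 b1 b2, Cmod (H4bar Phi wm wp M3 N3 b1 b2 a1 a2) = Cmod (H4bar Phi wm wp M3 N3 a1 a2 b1 b2))
    by (intros; rewrite H4_sym; reflexivity).
  assert (SG : forall a1 a2 b1 b2, Cmod (Ghat Phi wm wp M3 N3 b1 b2 a1 a2) = Cmod (Ghat Phi wm wp M3 N3 a1 a2 b1 b2))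
    by (intros; rewrite Gh_sym; reflexivity).
  set (S := Sc Phi wm wp M3 N3) in *.
  pose proof (qnorm1_ge0 S) as Q1. pose proof (qnorm2_ge0 S) as Q2.
  assert (QS1 : qnorm1 S <= qstar S) by apply Rmax_l.
  assert (QS2 : qnorm2 S <= qstar S) by apply Rmax_r.
  set (K := r ^ 3 * qstar S).
  assert (r3 : 0 <= r ^ 3) by (apply pow_le; lra).
  assert (K0 : 0 <= K) by (unfold K; apply Rmult_le_pos; lra).
  assert (KK : K <= (1 - delta) * r).
  { unfold K. replace (r ^ 3 * qstar S) with (r * (r ^ 2 * qstar S)) by ring.
    rewrite (Rmult_comm (1 - delta)). apply Rmult_le_compat_l; lra. }
  assert (Bd : forall w1 w2, cnorm2 w1 w2 <= r ->
    Cmod (dz1 S w1 w2) <= K /\ Cmod (dz2 S w1 w2) <= K /\ Cmod (dzb1 S w1 w2) <= K /\ Cmod (dzb2 S w1 w2) <= K).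
  { intros w1 w2 Hw. pose proof (cnorm2_l w1 w2). pose proof (cnorm2_r w1 w2).
    assert (W1 : Cmod w1 <= r) by lra. assert (W2 : Cmod w2 <= r) by lra. assert (r0 : 0 <= r) by lra.
    assert (E1 : qnorm1 S * r ^ 3 <= K) by (unfold K; rewrite Rmult_comm; apply Rmult_le_compat_l; auto).
    assert (E2 : qnorm2 S * r ^ 3 <= K) by (unfold K; rewrite Rmult_comm; apply Rmult_le_compat_l; auto).
    pose proof (dz1_bound S w1 w2 r r0 W1 W2) as A1. rewrite wt1_q in A1.
    pose proof (dz2_bound S w1 w2 r r0 W1 W2) as A2. rewrite wt2_q in A2.
    pose proof (dzb1_bound S w1 w2 r r0 W1 W2) as A3. rewrite (wtb1_sym S SS) in A3.
    pose proof (dzb2_bound S w1 w2 r r0 W1 W2) as A4. rewrite (wtb2_sym S SS) in A4.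
    lra. }
  split.
  { intros z1 z2 Hz. destruct (Bd z1 z2 Hz) as [A1 [A2 [A3 A4]]]. unfold gradnorm.
    repeat apply Rmax_lub; lra. }
  intros z1 z2 Hz.
  assert (Hyp : ODEhyp S (z1, z2) r K).
  { split; [auto|]. split; [lra|]. split.
    - simpl. assert (delta * r + (1 - delta) * r = r) by ring. lra.
    - intros w1 w2 Hw. destruct (Bd w1 w2 Hw) as [_ [_ [A3 A4]]]. auto. }
  destruct (ode_exist S (z1, z2) r K Hyp) as [g1 [g2 [G10 [G20 [Gc [Gd Gb]]]]]].
  cbn [fst snd] in G10, G20, Gb.
  assert (Gball : forall t, 0 <= t <= 1 -> Cmod (g1 t) <= r /\ Cmod (g2 t) <= r).
  { intros t Ht. destruct (Gb t Ht) as [B1 B2].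
    assert (Hz' : cnorm2 (fst (z1, z2)) (snd (z1, z2)) + K <= r).
    { simpl. assert (delta * r + (1 - delta) * r = r) by ring. lra. }
    pose proof (ball_of_dist (g1 t, g2 t) (z1, z2) K r t Hz' K0 Ht B1 B2) as Bb. simpl in Bb.
    split; [eapply Rle_trans; [apply cnorm2_l|exact Bb] | eapply Rle_trans; [apply cnorm2_r|exact Bb]]. }
  exists g1, g2.
  assert (FS : flow_sol S z1 z2 g1 g2).
  { split; auto. split; auto. split; [|split; [|split; [|split]]].
    - intros t Ht. apply Gd. lra.
    - apply filterlim_right_of_cts. exact (proj1 (Gc 0)).
    - apply filterlim_right_of_cts. exact (proj2 (Gc 0)).
    - apply filterlim_left_of_cts. exact (proj1 (Gc 1)).
    - apply filterlim_left_of_cts. exact (proj2 (Gc 1)). }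
  split; [exact FS|].
  split.
  { intros h1 h2 Hh. exact (ode_unique S z1 z2 g1 g2 h1 h2 G10 G20 Gc Gd Hh). }
  destruct (Gball 1 ltac:(lra)) as [Gb1 Gb2].
  split; [apply cnorm2_le; auto|].
  split.
  { destruct (Gb 1 ltac:(lra)) as [B1 B2]. rewrite Rmult_1_r in B1, B2. apply cnorm2_le; auto. }
  set (H4 := H4bar Phi wm wp M3 N3) in *.
  set (Gh := Ghat Phi wm wp M3 N3) in *.
  set (A := 2 * (qnorm1 H4 * qnorm1 S + qnorm2 H4 * qnorm2 S) * r ^ 6).
  set (B := 2 * (qnorm1 Gh * qnorm1 S + qnorm2 Gh * qnorm2 S) * r ^ 6).
  set (psi := fun t => (Nfun wm wp (g1 t) (g2 t) + qeval H4 (g1 t) (g2 t) + RtoC t * qeval Gh (g1 t) (g2 t))%C).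
  assert (Pd : forall t, 0 <= t <= 1 ->
     is_derive psi t (dP H4 S (g1 t) (g2 t) + RtoC t * dP Gh S (g1 t) (g2 t))%C).
  { intros t Ht. destruct (Gd t Ht) as [D1 D2]. apply psi_deriv; auto. }
  assert (M := MVI psi (fun t => dP H4 S (g1 t) (g2 t) + RtoC t * dP Gh S (g1 t) (g2 t))%C
                   (fun t => A * t + B / 2 * t ^ 2) (fun t => A + B * t) 0 1).
  cbv beta in M.
  assert (Mres : Cmod (psi 1 - psi 0) <= (A * 1 + B / 2 * 1 ^ 2) - (A * 0 + B / 2 * 0 ^ 2)).
  { apply M; clear M.
    - lra.
    - intros t Ht. apply Pd. lra.
    - intros t. auto_derive; auto. field.
    - intros t Ht. destruct (Gball t ltac:(lra)) as [X1 X2].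
      eapply Rle_trans. apply Cmod_triangle. rewrite Cmod_mult, Cmod_R, Rabs_right by lra.
      pose proof (dP_bound H4 S (g1 t) (g2 t) r ltac:(lra) X1 X2 SH SS) as P1.
      pose proof (dP_bound Gh S (g1 t) (g2 t) r ltac:(lra) X1 X2 SG SS) as P2.
      fold A in P1. fold B in P2.
      assert (t * Cmod (dP Gh S (g1 t) (g2 t)) <= t * B) by (apply Rmult_le_compat_l; lra).
      lra.
    - apply rcont_of_cts. eapply ctsC_of_derive. apply Pd. lra.
    - apply lcont_of_cts. eapply ctsC_of_derive. apply Pd. lra. }
  assert (E : (psi 1 - psi 0)%C = (Hfun Phi wm wp M3 N3 (g1 1) (g2 1) - Nfun wm wp z1 z2 - qeval H4 z1 z2)%C).
  { unfold psi, H4, Gh. apply psi_diff; auto; lra. }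
  rewrite <- E.
  eapply Rle_trans. exact Mres.
  unfold A, B. right. field.
Qed.
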